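(* Assume $\mathrm{NF}_{\mathrm{fin}}(G_0,G_1,G_2,G_3)$. Then: (1) $\mathrm{NF}_{\mathrm{fin}}(G_0,G_2,G_1,G_3)$ holds. (2) If $G_0 \subseteq G_\ell' \subseteq G_\ell$ are subgroups for $\ell = 1,2$ and $G_1' \cup G_2' \subseteq G_3' \subseteq G_3$ with $G_3'$ a subgroup, then $\mathrm{NF}_{\mathrm{rfin}}(G_0,G_1',G_2',G_3')$. (3) If $\mathrm{NF}_{\mathrm{fin}}(G_0',G_1',G_2',G_3')$, $G_3'$ is generated by $G_1' \cup G_2'$, and $f_\ell$ is an isomorphism from $G_\ell'$ onto $G_\ell$ for $\ell = 0,1,2$ with $f_1\restriction G_0' = f_0 = f_2 \restriction G_0'$, then there is an embedding $f_3$ of $G_3'$ into $G_3$ extending $f_1 \cup f_2$. (4) If $\bar a$ is a finite sequence from $G_2$, then $\mathrm{tp}_{\mathrm{bs}}(\bar a,G_1,G_3)$ does not split over $G_0$.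
   Context: A group is locally finite if every finitely generated subgroup is finite. An amalgamation try is $\mathbf{x} = (G_{\mathbf{x},0},G_{\mathbf{x},1},G_{\mathbf{x},2},\mathbf{I}_{\mathbf{x},1},\mathbf{I}_{\mathbf{x},2})$ where $G_{\mathbf{x},1},G_{\mathbf{x},2}$ are locally finite groups with common subgroup $G_{\mathbf{x},0}$, $\mathbf{I}_{\mathbf{x},\ell}$ is a set of representatives (without repetition) of the left cosets of $G_{\mathbf{x},0}$ in $G_{\mathbf{x},\ell}$, and $e \in \mathbf{I}_{\mathbf{x},1}\cap\mathbf{I}_{\mathbf{x},2}$. With $\mathcal{U}_{\mathbf{x}} = \{(g_0,g_1,g_2): g_0 \in G_{\mathbf{x},0}, g_\ell \in \mathbf{I}_{\mathbf{x},\ell}\}$, for $g \in G_{\mathbf{x},1}$ the permutation $\mathbf{j}_{\mathbf{x},1}(g)$ maps $(g_0,g_1,g_2)$ to $(g_0',g_1',g_2)$ where $(g_1',g_0') \in \mathbf{I}_{\mathbf{x},1}\times G_{\mathbf{x},0}$ is unique with $g_1'g_0' = g_1g_0g$; symmetrically $\mathbf{j}_{\mathbf{x},2}(g)$ for $g \in G_{\mathbf{x},2}$ maps $(g_0,g_1,g_2)$ to $(g_0',g_1,g_2')$ with $g_2'g_0' = g_2g_0g$. Permutations act on the right and $G_{\mathbf{x}}$ is the permutation group generated by $\mathbf{j}_{\mathbf{x},1}(G_{\mathbf{x},1}) \cup \mathbf{j}_{\mathbf{x},2}(G_{\mathbf{x},2})$. $\mathrm{NF}_{\mathrm{fin}}(G_0,G_1,G_2,G_3)$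 means: $G_0,G_1,G_2$ are finite groups, $G_3$ is locally finite, $G_0 \subseteq G_\ell \subseteq G_3$ ($\ell=1,2$), $G_3 = \langle G_1 \cup G_2\rangle$; for every amalgamation try $\mathbf{x}$ with $G_{\mathbf{x},0} = G_0$, $G_\ell \subseteq G_{\mathbf{x},\ell}$ ($\ell=1,2$) there is a homomorphism $\mathbf{f}: G_3 \to G_{\mathbf{x}}$ with $\mathbf{f}\restriction G_\ell = \mathbf{j}_{\mathbf{x},\ell}\restriction G_\ell$; and for every $a \in G_3\setminus\{e\}$ some such $\mathbf{x},\mathbf{f}$ has $\mathbf{f}(a)\neq e$. $\mathrm{NF}_{\mathrm{rfin}}(G_0,G_1,G_2,G_3)$ means $G_1, G_2$ are subgroups of the locally finite group $G_3$ and $\mathrm{NF}_{\mathrm{fin}}(G_0,G_1,G_2,\langle G_1\cup G_2\rangle_{G_3})$. For $A \subseteq H$ and a tuple $\bar a$ from $H$, $\mathrm{tp}_{\mathrm{bs}}(\bar a,A,H)$ is the set of formulas $\sigma(\bar x,\bar b) = e$ and $\sigma(\bar x,\bar b) \neq e$ ($\sigma$ a group word, $\bar b$ a finite tuple from $A$) satisfied by $\bar a$ in $H$. For $K \subseteq G \subseteq H$, the type $\mathrm{tp}_{\mathrm{bs}}(\bar a,G,H)$ does not split over $K$ if for every $m$ and $\bar b_1,\bar b_2 \in G^m$ with $\mathrm{tp}_{\mathrm{bs}}(\bar b_1,K,G) = \mathrm{tp}_{\mathrm{bs}}(\bar b_2,K,G)$ we have $\mathrm{tp}_{\mathrm{bs}}(\bar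 b_1{}^\frown\bar a,K,H) = \mathrm{tp}_{\mathrm{bs}}(\bar b_2{}^\frown \bar a,K,H)$. *)

(* Defs.v *)
(* groups are mathcomp's (possibly infinite) [groupType]
   from boot/monoid.v; subgroups are Prop-valued predicates on the carrier. *)
From HB Require Import structures.
From mathcomp Require Import all_boot.

Set Implicit Arguments.
Unset Strict Implicit.
Unset Printing Implicit Defensive.

Local Open Scope group_scope.

Definition is_subgroup (G : groupType) (P : G -> Prop) : Prop :=
  P 1 /\ (forall x y, P x -> P y -> P (x * y)) /\ (forall x, P x -> P x^-1).

Definition incl_set (T : Type) (P Q : T -> Prop) : Prop := forall x, P x -> Q x.

Definition unionP (T : Type) (P Q : T -> Prop) : T -> Prop := fun x => P x \/ Q x.

Definition finiteP (T : eqType) (P : T -> Prop) : Prop :=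
  exists s : seq T, forall x, P x <-> x \in s.

Inductive gen (G : groupType) (A : G -> Prop) : G -> Prop :=
| gen_in x : A x -> gen A x
| gen_one : gen A 1
| gen_mul x y : gen A x -> gen A y -> gen A (x * y)
| gen_inv x : gen A x -> gen A x^-1.

Definition locally_finite (G : groupType) (P : G -> Prop) : Prop :=
  forall s : seq G, (forall x, x \in s -> P x) ->
    finiteP (gen (fun x => x \in s)).

Definition generated_by (G : groupType) (P3 P1 P2 : G -> Prop) : Prop :=
  forall x, P3 x <-> gen (unionP P1 P2) x.

Definition is_emb (G H : groupType) (P : G -> Prop) (f : G -> H) : Prop :=
  (forall x y, P x -> P y -> f (x * y) = f x * f y) /\
  (forall x y, P x -> P y -> f x = f y -> x = y).

Definition is_iso_onto (G H : groupType) (P : G -> Prop) (Q : H -> Prop)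
    (f : G -> H) : Prop :=
  is_emb P f /\ (forall x, P x -> Q (f x)) /\
  (forall y, Q y -> exists x, P x /\ f x = y).

Definition coset_reps (G H : groupType) (P0 : G -> Prop) (e : G -> H)
    (I : H -> Prop) : Prop :=
  I 1 /\
  (forall h, exists r, I r /\ exists g0, P0 g0 /\ h = r * e g0) /\
  (forall r r', I r -> I r' -> (exists g0, P0 g0 /\ r' = r * e g0) -> r = r').

(* An amalgamation try x with G_{x,0} = G0 and G_l \subseteq G_{x,l}:
   the locally finite groups G_{x,l} are H1, H2, containing G_l via the
   embeddings e1, e2 (so that G0 is their common subgroup), and I1, I2 are the
   sets of coset representatives. *)
Definition is_try (G H1 H2 : groupType) (P0 P1 P2 : G -> Prop)
    (e1 : G -> H1) (e2 : G -> H2) (I1 : H1 -> Prop) (I2 : H2 -> Prop) : Prop :=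
  locally_finite (fun _ : H1 => True) /\ locally_finite (fun _ : H2 => True) /\
  is_emb P1 e1 /\ is_emb P2 e2 /\
  coset_reps P0 e1 I1 /\ coset_reps P0 e2 I2.

Section Try.
Variables (G H1 H2 : groupType) (P0 : G -> Prop)
  (e1 : G -> H1) (e2 : G -> H2) (I1 : H1 -> Prop) (I2 : H2 -> Prop).

(* elements (g0, g1, g2) of U_x are encoded as ((g0, g1), g2) *)
Definition Ux := (G * H1 * H2)%type.

Definition inUx (u : Ux) : Prop := P0 u.1.1 /\ I1 u.1.2 /\ I2 u.2.

(* graph of the permutation j_{x,1}(g) *)
Definition j1rel (g : H1) (u v : Ux) : Prop :=
  v.2 = u.2 /\ P0 v.1.1 /\ I1 v.1.2 /\ v.1.2 * e1 v.1.1 = u.1.2 * e1 u.1.1 * g.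

(* graph of the permutation j_{x,2}(g) *)
Definition j2rel (g : H2) (u v : Ux) : Prop :=
  v.1.2 = u.1.2 /\ P0 v.1.1 /\ I2 v.2 /\ v.2 * e2 v.1.1 = u.2 * e2 u.1.1 * g.

Fixpoint genrel (ws : seq (H1 + H2)) (u v : Ux) : Prop :=
  match ws with
  | [::] => v = u
  | w :: ws' =>
      exists m, (match w with inl g => j1rel g u m | inr g => j2rel g u m end)
                /\ genrel ws' m v
  end.

(* sigma (restricted to U_x) belongs to G_x, the permutation group generated
   by j_{x,1}(G_{x,1}) u j_{x,2}(G_{x,2}) (as these sets are closed under
   inverses, G_x is the set of finite products of generators) *)
Definition in_Gx (sigma : Ux -> Ux) : Prop :=
  exists ws, forall u, inUx u -> genrel ws u (sigma u).

(* f : G3 -> G_x is a homomorphism (permutations act on the right) with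
   f|G_l = j_{x,l}|G_l *)
Definition hom_to_Gx (P1 P2 P3 : G -> Prop) (f : G -> Ux -> Ux) : Prop :=
  (forall a, P3 a -> in_Gx (f a)) /\
  (forall a b, P3 a -> P3 b -> forall u, inUx u -> f (a * b) u = f b (f a u)) /\
  (forall g, P1 g -> forall u, inUx u -> j1rel (e1 g) u (f g u)) /\
  (forall g, P2 g -> forall u, inUx u -> j2rel (e2 g) u (f g u)).

End Try.

Definition NF_fin (G : groupType) (P0 P1 P2 P3 : G -> Prop) : Prop :=
  finiteP P0 /\ finiteP P1 /\ finiteP P2 /\
  is_subgroup P0 /\ is_subgroup P1 /\ is_subgroup P2 /\ is_subgroup P3 /\
  locally_finite P3 /\
  incl_set P0 P1 /\ incl_set P0 P2 /\ incl_set P1 P3 /\ incl_set P2 P3 /\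
  generated_by P3 P1 P2 /\
  (forall (H1 H2 : groupType) (e1 : G -> H1) (e2 : G -> H2)
          (I1 : H1 -> Prop) (I2 : H2 -> Prop),
      is_try P0 P1 P2 e1 e2 I1 I2 ->
      exists f, hom_to_Gx P0 e1 e2 I1 I2 P1 P2 P3 f) /\
  (forall a, P3 a -> a <> 1 ->
     exists (H1 H2 : groupType) (e1 : G -> H1) (e2 : G -> H2)
            (I1 : H1 -> Prop) (I2 : H2 -> Prop),
       is_try P0 P1 P2 e1 e2 I1 I2 /\
       exists f, hom_to_Gx P0 e1 e2 I1 I2 P1 P2 P3 f /\
         exists u, inUx P0 I1 I2 u /\ f a u <> u).

Definition NF_rfin (G : groupType) (P0 P1 P2 P3 : G -> Prop) : Prop :=
  is_subgroup P3 /\ locally_finite P3 /\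
  is_subgroup P1 /\ is_subgroup P2 /\ incl_set P1 P3 /\ incl_set P2 P3 /\
  NF_fin P0 P1 P2 (gen (unionP P1 P2)).

Inductive word : Type :=
| WVar of nat
| WOne
| WMul of word & word
| WInv of word.

Fixpoint weval (G : groupType) (v : nat -> G) (w : word) : G :=
  match w with
  | WVar i => v i
  | WOne => 1
  | WMul w1 w2 => weval v w1 * weval v w2
  | WInv w1 => (weval v w1)^-1
  end.

Fixpoint scoped (n : nat) (w : word) : bool :=
  match w with
  | WVar i => i < n
  | WOne => true
  | WMul w1 w2 => scoped n w1 && scoped n w2
  | WInv w1 => scoped n w1
  end.

(* A basic formula over parameters is a triple (sigma, bs, pos): the formula
   sigma(x_0..x_{n-1}, bs) = e  (pos = true)  or  <> e  (pos = false), where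
   variable i < n stands for x_i and variable n + j for the parameter bs_j.
   tp_bs xs A is the set of such formulas with parameters from A satisfied by
   the tuple xs (evaluated in the ambient group G, which is also the group
   of all subgroups considered). *)
Definition tp_bs (G : groupType) (xs : seq G) (A : G -> Prop)
    (phi : word * seq G * bool) : Prop :=
  let: (w, bs, pos) := phi in
  scoped (size xs + size bs) w /\ (forall b, b \in bs -> A b) /\
  (if pos then weval (fun i => nth 1 (xs ++ bs) i) w = 1
   else weval (fun i => nth 1 (xs ++ bs) i) w <> 1).

Definition same_tp (G : groupType) (xs ys : seq G) (A : G -> Prop) : Prop :=
  forall phi, tp_bs xs A phi <-> tp_bs ys A phi.

Definition does_not_split (G : groupType) (a : seq G) (Gs K : G -> Prop) : Prop :=
  forall b1 b2 : seq G, size b1 = size b2 ->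
    (forall x, x \in b1 -> Gs x) -> (forall x, x \in b2 -> Gs x) ->
    same_tp b1 b2 K -> same_tp (b1 ++ a) (b2 ++ a) K.

(* Main.v *)
Require Import Defs.
From HB Require Import structures.
From mathcomp Require Import all_boot zify.
From Stdlib Require Import ClassicalEpsilon Classical FunctionalExtensionality PropExtensionality.

Set Implicit Arguments.
Unset Strict Implicit.
Unset Printing Implicit Defensive.
Local Open Scope group_scope.

Section Gen.
Variable G : groupType.
Implicit Types (A B S : G -> Prop).

Lemma gen_sub A S : is_subgroup S -> incl_set A S -> incl_set (gen A) S.
Proof.
case=> S1 [SM SV] AS x; elim=> //; by [apply: AS | move=> *; apply: SM | move=> *; apply: SV].
Qed.

Lemma gen_mono A B : incl_set A B -> incl_set (gen A) (gen B).
Proof. by move=> AB x; elim=> *; [apply: gen_in; apply: AB|apply: gen_one|apply: gen_mul|apply: gen_inv]. Qed.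

Lemma gen_subgroup A : is_subgroup (gen A).
Proof. split; [exact: gen_one|split; [exact: gen_mul|exact: gen_inv]]. Qed.

Definition zval (z : G + G) : G := match z with inl x => x | inr x => x end.
Definition prodG (l : seq (G + G)) : G := foldr (fun z acc => zval z * acc) 1 l.
Fixpoint goodl A B (l : seq (G + G)) : Prop :=
  match l with [::] => True
  | z :: l' => (match z with inl x => A x | inr x => B x end) /\ goodl A B l' end.
Definition zinv (z : G + G) := match z with inl x => inl x^-1 | inr x => inr x^-1 end.
Definition invl (l : seq (G + G)) := rev (map zinv l).

Lemma prodG_cat l1 l2 : prodG (l1 ++ l2) = prodG l1 * prodG l2.
Proof. by elim: l1 => [|z l IH] /=; rewrite ?mul1g // IH mulgA. Qed.

Lemma prodG_rcons l z : prodG (rcons l z) = prodG l * zval z.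
Proof. by rewrite -cats1 prodG_cat /= mulg1. Qed.

Lemma prodG_invl l : prodG (invl l) = (prodG l)^-1.
Proof.
elim: l => [|z l IH]; first by rewrite /= invg1.
rewrite /invl /= rev_cons prodG_rcons -/(invl l) IH invgM; by case: z.
Qed.

Lemma goodl_cat A B l1 l2 : goodl A B l1 -> goodl A B l2 -> goodl A B (l1 ++ l2).
Proof. by elim: l1 => [|z l IH] //= [H1 H2] H3; split=> //; apply: IH. Qed.

Lemma goodl_rcons A B l z : goodl A B l -> goodl A B [:: z] -> goodl A B (rcons l z).
Proof. by rewrite -cats1; apply: goodl_cat. Qed.

Lemma goodl_invl A B l : is_subgroup A -> is_subgroup B -> goodl A B l -> goodl A B (invl l).
Proof.
move=> [_ [_ AV]] [_ [_ BV]]; elim: l => [|z l IH] //= [Hz Hl].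
rewrite /invl /= rev_cons; apply: goodl_rcons; first exact: IH.
by case: z Hz => x /= Hx; split=> //; [apply: AV | apply: BV].
Qed.

Lemma goodl_mono A B A' B' l : incl_set A A' -> incl_set B B' -> goodl A B l -> goodl A' B' l.
Proof. move=> HA HB; elim: l => [|[x|x] l IH] //= [H1 H2]; split; auto. Qed.

Lemma decomp A B x : is_subgroup A -> is_subgroup B -> gen (unionP A B) x ->
  exists l, goodl A B l /\ prodG l = x.
Proof.
move=> sA sB; elim=> {x}.
- move=> x [Ax|Bx]; [exists [:: inl x] | exists [:: inr x]]; by rewrite /= mulg1.
- by exists [::].
- move=> x y _ [l1 [g1 <-]] _ [l2 [g2 <-]]; exists (l1 ++ l2); split; [exact: goodl_cat|exact: prodG_cat].
- move=> x _ [l [g <-]]; exists (invl l); split; [exact: goodl_invl|exact: prodG_invl].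
Qed.

Lemma prodG_in S A B l : is_subgroup S -> incl_set A S -> incl_set B S -> goodl A B l -> S (prodG l).
Proof.
move=> [S1 [SM _]] AS BS; elim: l => [|[x|x] l IH] //= [Hx Hl]; apply: SM; auto.
Qed.

Lemma gen_ext A B : (forall x, A x <-> B x) -> forall x, gen A x <-> gen B x.
Proof. move=> H x; split; apply: gen_mono => y; by case: (H y). Qed.

Lemma filter_ex (T : eqType) (P : T -> Prop) (s : seq T) :
  exists s' : seq T, forall x : T, (x \in s /\ P x) <-> x \in s'.
Proof.
elim: s => [|a s [s' IH]]; first by exists [::]; move=> x; split=> [[]|].
case: (classic (P a)) => Pa.
- exists (a :: s') => x; rewrite !in_cons; split.
  + by case=> /orP [/eqP ->|xs] Px; rewrite ?eqxx // (proj1 (IH x)) ?orbT.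
  + case/orP=> [/eqP ->|/IH [xs Px]]; by rewrite ?eqxx ?xs ?orbT.
- exists s' => x; rewrite in_cons; split.
  + by case=> /orP [/eqP ->|xs] Px //; apply/IH.
  + by move/IH=> [xs Px]; rewrite xs orbT.
Qed.

Lemma finite_sub (T : eqType) (P Q : T -> Prop) : finiteP Q -> incl_set P Q -> finiteP P.
Proof.
case=> s Hs PQ; case: (filter_ex P s) => s' Hs'.
exists s' => x; split; first by move=> Px; apply/Hs'; split=> //; apply/Hs/PQ.
by move/Hs'=> [].
Qed.

End Gen.


Definition gclosed (G : groupType) (P : pred G) :=
  [/\ P 1, (forall x y, P x -> P y -> P (x * y)) & (forall x, P x -> P x^-1)].
Section SubG.
Variables (G : groupType) (P : pred G) (hP : gclosed P).
Definition subg (h : gclosed P) := {x : G | P x}.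
HB.instance Definition _ := Choice.on (subg hP).
Let P1 : P 1. Proof. by case: hP. Qed.
Let PM x y : P x -> P y -> P (x * y). Proof. by case: hP => _ H _; apply: H. Qed.
Let PV x : P x -> P x^-1. Proof. by case: hP => _ _ H; apply: H. Qed.
Definition sone : subg hP := exist _ 1 P1.
Definition smul (x y : subg hP) : subg hP := exist _ (val x * val y) (PM (valP x) (valP y)).
Definition sinv (x : subg hP) : subg hP := exist _ (val x)^-1 (PV (valP x)).
Lemma smulA : associative smul. Proof. by move=> x y z; apply: val_inj; rewrite /= mulgA. Qed.
Lemma smul1 : left_id sone smul. Proof. by move=> x; apply: val_inj; rewrite /= mul1g. Qed.
Lemma smulg1 : right_id sone smul. Proof. by move=> x; apply: val_inj; rewrite /= mulg1. Qed.
Lemma smulV : left_inverse sone sinv smul. Proof. by move=> x; apply: val_inj; rewrite /= mulVg. Qed.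
Lemma smulgV : right_inverse sone sinv smul. Proof. by move=> x; apply: val_inj; rewrite /= mulgV. Qed.
HB.instance Definition _ := isGroup.Build (subg hP) smulA smul1 smulg1 smulV smulgV.
Lemma val_mul (x y : subg hP) : val (x * y) = val x * val y. Proof. by []. Qed.
Lemma val_one : val (1 : subg hP) = 1. Proof. by []. Qed.
End SubG.
Definition piS (G : groupType) (P : pred G) (h : gclosed P) (x : G) : subg h := insubd (1 : subg h) x.
Lemma val_piS (G : groupType) (P : pred G) (h : gclosed P) x : P x -> val (piS h x) = x.
Proof. by move=> Px; rewrite /piS val_insubd Px. Qed.

Definition propb (T : Type) (P : T -> Prop) : pred T :=
  fun x => if excluded_middle_informative (P x) then true else false.
Lemma propbE (T : Type) (P : T -> Prop) x : propb P x <-> P x.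
Proof. by rewrite /propb; case: excluded_middle_informative. Qed.

Lemma gclosed_sub (G : groupType) (P : G -> Prop) : is_subgroup P -> gclosed (propb P).
Proof.
case=> P1 [PM PV]; split; first exact/propbE.
- by move=> x y /propbE Px /propbE Py; apply/propbE; apply: PM.
- by move=> x /propbE Px; apply/propbE; apply: PV.
Qed.


Section Coset.
Variables (G H : groupType) (P0 : G -> Prop) (e : G -> H) (I : H -> Prop).
Hypotheses (sP0 : is_subgroup P0) (em : is_emb P0 e) (cr : coset_reps P0 e I).

Lemma emb1 : e 1 = 1.
Proof.
case: sP0 => P01 _; case: em => eM _.
by apply: (@mulgI _ (e 1)); rewrite -eM // !mulg1.
Qed.

Lemma embV c : P0 c -> e c^-1 = (e c)^-1.
Proof.
move=> Pc; case: sP0 => P01 [_ PV]; case: em => eM _.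
symmetry; apply: mulg1_eq; by rewrite -eM ?mulgV ?emb1 //; apply: PV.
Qed.

Lemma embM a b : P0 a -> P0 b -> e (a * b) = e a * e b.
Proof. by case: em => eM _; apply: eM. Qed.

Lemma emb_inj a b : P0 a -> P0 b -> e a = e b -> a = b.
Proof. by case: em => _ eI; apply: eI. Qed.

Lemma coset_eq r r' a b : I r -> I r' -> P0 a -> P0 b -> r * e a = r' * e b -> r = r' /\ a = b.
Proof.
move=> Ir Ir' Pa Pb E; case: sP0 => _ [PM PV]; case: cr => _ [_ U].
have rr : r = r'.
  apply: U => //; exists (a * b^-1); split; first by apply: PM => //; apply: PV.
  rewrite embM ?embV //; last by apply: PV.
  by rewrite mulgA E mulgK.
split=> //; apply: emb_inj => //; move: E; rewrite rr; exact: mulgI.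
Qed.

Lemma coset_ex h : exists r g0, I r /\ P0 g0 /\ h = r * e g0.
Proof. case: cr => _ [Ex _]; case: (Ex h) => r [Ir [g0 [Pg ->]]]; by exists r, g0. Qed.

Lemma coset_I1 : I 1. Proof. by case: cr. Qed.
End Coset.

Section TryLemmas.
Variables (G H1 H2 : groupType) (P0 : G -> Prop) (e1 : G -> H1) (e2 : G -> H2)
  (I1 : H1 -> Prop) (I2 : H2 -> Prop).
Hypotheses (sP0 : is_subgroup P0) (em1 : is_emb P0 e1) (em2 : is_emb P0 e2)
  (cr1 : coset_reps P0 e1 I1) (cr2 : coset_reps P0 e2 I2).

Local Notation U := (inUx P0 I1 I2).
Local Notation J1 := (j1rel P0 e1 I1 (H2:=H2)).
Local Notation J2 := (j2rel P0 e2 I2 (H1:=H1)).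
Local Notation GR := (genrel P0 e1 e2 I1 I2).

Lemma j1_fun g u v v' : J1 g u v -> J1 g u v' -> v = v'.
Proof.
case: v => [[a b] c]; case: v' => [[a' b'] c'] [E1 [Pa [Ib E]]] [E1' [Pa' [Ib' E']]]; simpl in *.
have [-> ->] := coset_eq sP0 em1 cr1 Ib Ib' Pa Pa' (etrans E (esym E')). by rewrite E1 E1'.
Qed.

Lemma j2_fun g u v v' : J2 g u v -> J2 g u v' -> v = v'.
Proof.
case: v => [[a b] c]; case: v' => [[a' b'] c'] [E1 [Pa [Ib E]]] [E1' [Pa' [Ib' E']]]; simpl in *.
have [-> ->] := coset_eq sP0 em2 cr2 Ib Ib' Pa Pa' (etrans E (esym E')). by rewrite E1 E1'.
Qed.

Lemma j1_inj g u u' v : U u -> U u' -> J1 g u v -> J1 g u' v -> u = u'.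
Proof.
case: u => [[a b] c]; case: u' => [[a' b'] c'] [Pa [Ib Ic]] [Pa' [Ib' Ic']] [E1 [_ [_ E2]]] [E1' [_ [_ E2']]]; simpl in *.
have := etrans (esym E2) E2'; move/mulIg => E.
have [-> ->] := coset_eq sP0 em1 cr1 Ib Ib' Pa Pa' E. by rewrite -E1 -E1'.
Qed.

Lemma j2_inj g u u' v : U u -> U u' -> J2 g u v -> J2 g u' v -> u = u'.
Proof.
case: u => [[a b] c]; case: u' => [[a' b'] c'] [Pa [Ib Ic]] [Pa' [Ib' Ic']] [E1 [_ [_ E2]]] [E1' [_ [_ E2']]]; simpl in *.
have := etrans (esym E2) E2'; move/mulIg => E.
have [-> ->] := coset_eq sP0 em2 cr2 Ic Ic' Pa Pa' E. by rewrite -E1 -E1'.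
Qed.

Lemma j1_tot g u : exists v, J1 g u v.
Proof.
have [r [g0 [Ir [Pg E]]]] := coset_ex cr1 (u.1.2 * e1 u.1.1 * g).
by exists ((g0, r), u.2).
Qed.

Lemma j2_tot g u : exists v, J2 g u v.
Proof.
have [r [g0 [Ir [Pg E]]]] := coset_ex cr2 (u.2 * e2 u.1.1 * g).
by exists ((g0, u.1.2), r).
Qed.

Lemma j1_U g u v : U u -> J1 g u v -> U v.
Proof. case: u => [[a b] c]; case: v => [[a' b'] c'] [Pa [Ib Ic]] [E [P [I _]]]; simpl in *; subst; by rewrite /inUx /=. Qed.

Lemma j2_U g u v : U u -> J2 g u v -> U v.
Proof. case: u => [[a b] c]; case: v => [[a' b'] c'] [Pa [Ib Ic]] [E [P [I _]]]; simpl in *; subst; by rewrite /inUx /=. Qed.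

Lemma j1_one u : U u -> J1 1 u u.
Proof. by case=> Pa [Ib Ic]; rewrite /j1rel mulg1. Qed.

Lemma j2_one u : U u -> J2 1 u u.
Proof. by case=> Pa [Ib Ic]; rewrite /j2rel mulg1. Qed.

Definition jrel (w : H1 + H2) u v := match w with inl g => J1 g u v | inr g => J2 g u v end.

Lemma GR_cons w ws u v : GR (w :: ws) u v <-> exists m, jrel w u m /\ GR ws m v.
Proof. by []. Qed.

Lemma GR_fun ws u v v' : GR ws u v -> GR ws u v' -> v = v'.
Proof.
elim: ws u => [|w ws IH] u /=; first by move=> -> ->.
move=> [m [Hm Hv]] [m' [Hm' Hv']]; have Em : m = m'.
  by case: w Hm Hm' => g; [apply: j1_fun|apply: j2_fun].
by subst m'; apply: IH Hv Hv'.
Qed.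

Lemma GR_U ws u v : U u -> GR ws u v -> U v.
Proof.
elim: ws u => [|w ws IH] u /=; first by move=> ? ->.
move=> Uu [m [Hm Hv]]; apply: IH Hv.
by case: w Hm => g; [apply: j1_U|apply: j2_U].
Qed.

Lemma GR_inj ws u u' v : U u -> U u' -> GR ws u v -> GR ws u' v -> u = u'.
Proof.
elim: ws u u' => [|w ws IH] u u' /=; first by move=> _ _ -> ->.
move=> Uu Uu' [m [Hm Hv]] [m' [Hm' Hv']].
have Um : U m by case: w Hm {Hm'} => g; [apply: j1_U|apply: j2_U].
have Um' : U m' by case: w Hm' {Hm} => g; [apply: j1_U|apply: j2_U].
have Em := IH _ _ Um Um' Hv Hv'; subst m'.
by case: w Hm Hm' => g; [apply: j1_inj|apply: j2_inj].
Qed.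

Lemma GR_tot ws u : exists v, GR ws u v.
Proof.
elim: ws u => [|w ws IH] u /=; first by exists u.
have [m Hm] : exists m, jrel w u m by case: w => g; [apply: j1_tot|apply: j2_tot].
by case: (IH m) => v Hv; exists v, m.
Qed.

Lemma GR_cat ws1 ws2 u v w : GR ws1 u v -> GR ws2 v w -> GR (ws1 ++ ws2) u w.
Proof.
elim: ws1 u => [|w1 ws IH] u /=; first by move=> ->.
by move=> [m [Hm Hv]] Hw; exists m; split=> //; apply: IH Hv Hw.
Qed.

End TryLemmas.


Definition wordE (G H1 H2 : groupType) (e1 : G -> H1) (e2 : G -> H2) (l : seq (G + G)) :
  seq (H1 + H2) :=
  map (fun z => match z with inl x => inl (e1 x) | inr x => inr (e2 x) end) l.

Lemma wordE_cat (G H1 H2 : groupType) (e1 : G -> H1) (e2 : G -> H2) l1 l2 :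
  wordE e1 e2 (l1 ++ l2) = wordE e1 e2 l1 ++ wordE e1 e2 l2.
Proof. exact: map_cat. Qed.

Lemma emb_restr (G H : groupType) (P Q : G -> Prop) (f : G -> H) :
  is_emb P f -> incl_set Q P -> is_emb Q f.
Proof. by case=> M I QP; split=> x y Qx Qy; [apply: M|apply: I]; apply: QP. Qed.

Section HG.
Variables (G H1 H2 : groupType) (P0 P1 P2 P3 : G -> Prop) (e1 : G -> H1) (e2 : G -> H2)
  (I1 : H1 -> Prop) (I2 : H2 -> Prop) (f : G -> Ux G H1 H2 -> Ux G H1 H2).
Hypotheses (sP0 : is_subgroup P0) (em1 : is_emb P1 e1) (em2 : is_emb P2 e2)
  (cr1 : coset_reps P0 e1 I1) (cr2 : coset_reps P0 e2 I2)
  (P01 : incl_set P0 P1) (P02 : incl_set P0 P2)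
  (sP3 : is_subgroup P3) (P13 : incl_set P1 P3) (P23 : incl_set P2 P3)
  (hf : hom_to_Gx P0 e1 e2 I1 I2 P1 P2 P3 f).

Local Notation U := (inUx P0 I1 I2).
Local Notation GR := (genrel P0 e1 e2 I1 I2).

Let em01 : is_emb P0 e1. Proof. exact: emb_restr em1 P01. Qed.
Let em02 : is_emb P0 e2. Proof. exact: emb_restr em2 P02. Qed.

Lemma hom_one u : U u -> f 1 u = u.
Proof.
move=> Uu; case: hf => _ [_ [hj _]]; case: (sP0) => P01x _.
have := hj 1 (P01 P01x) u Uu; rewrite (emb1 sP0 em01) => J.
exact: (j1_fun sP0 em01 cr1 J (j1_one e1 Uu)).
Qed.

Lemma HG l u : goodl P1 P2 l -> U u -> GR (wordE e1 e2 l) u (f (prodG l) u).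
Proof.
elim: l u => [|z l IH] u /=; first by move=> _ Uu; rewrite hom_one.
move=> [Hz Hl] Uu; case: hf => _ [hM [hj1 hj2]].
have P3z : P3 (zval z) by case: z Hz => x Hx /=; [apply: P13|apply: P23].
have P3l : P3 (prodG l) by apply: prodG_in Hl.
rewrite hM //; exists (f (zval z) u); split.
  by case: z Hz {P3z} => x Hx /=; [apply: hj1|apply: hj2].
apply: IH => //; case: z Hz {P3z} => x Hx /=.
  exact: j1_U Uu (hj1 _ Hx _ Uu).
exact: j2_U Uu (hj2 _ Hx _ Uu).
Qed.

End HG.


Section NFparts.
Variables (G : groupType) (P0 P1 P2 P3 : G -> Prop).
Hypothesis NF : NF_fin P0 P1 P2 P3.
Lemma NF_sP0 : is_subgroup P0. Proof. by case: NF => _ [_ [_ [h _]]]. Qed.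
Lemma NF_sP1 : is_subgroup P1. Proof. by case: NF => _ [_ [_ [_ [h _]]]]. Qed.
Lemma NF_sP2 : is_subgroup P2. Proof. by case: NF => _ [_ [_ [_ [_ [h _]]]]]. Qed.
Lemma NF_sP3 : is_subgroup P3. Proof. by case: NF => _ [_ [_ [_ [_ [_ [h _]]]]]]. Qed.
Lemma NF_lf3 : locally_finite P3. Proof. by case: NF => _ [_ [_ [_ [_ [_ [_ [h _]]]]]]]. Qed.
Lemma NF_01 : incl_set P0 P1. Proof. by case: NF => _ [_ [_ [_ [_ [_ [_ [_ [h _]]]]]]]]. Qed.
Lemma NF_02 : incl_set P0 P2. Proof. by case: NF => _ [_ [_ [_ [_ [_ [_ [_ [_ [h _]]]]]]]]]. Qed.
Lemma NF_13 : incl_set P1 P3. Proof. by case: NF => _ [_ [_ [_ [_ [_ [_ [_ [_ [_ [h _]]]]]]]]]]. Qed.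
Lemma NF_23 : incl_set P2 P3. Proof. by case: NF => _ [_ [_ [_ [_ [_ [_ [_ [_ [_ [_ [h _]]]]]]]]]]]. Qed.
Lemma NF_gen : generated_by P3 P1 P2.
Proof. by case: NF => _ [_ [_ [_ [_ [_ [_ [_ [_ [_ [_ [_ [h _]]]]]]]]]]]]. Qed.
Lemma NF_ex : forall (H1 H2 : groupType) (e1 : G -> H1) (e2 : G -> H2)
          (I1 : H1 -> Prop) (I2 : H2 -> Prop),
      is_try P0 P1 P2 e1 e2 I1 I2 ->
      exists f, hom_to_Gx P0 e1 e2 I1 I2 P1 P2 P3 f.
Proof. by case: NF => _ [_ [_ [_ [_ [_ [_ [_ [_ [_ [_ [_ [_ [h _]]]]]]]]]]]]]. Qed.
Lemma NF_sep : forall a, P3 a -> a <> 1 ->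
     exists (H1 H2 : groupType) (e1 : G -> H1) (e2 : G -> H2)
            (I1 : H1 -> Prop) (I2 : H2 -> Prop),
       is_try P0 P1 P2 e1 e2 I1 I2 /\
       exists f, hom_to_Gx P0 e1 e2 I1 I2 P1 P2 P3 f /\
         exists u, inUx P0 I1 I2 u /\ f a u <> u.
Proof. by case: NF => _ [_ [_ [_ [_ [_ [_ [_ [_ [_ [_ [_ [_ [_ h]]]]]]]]]]]]]. Qed.
Lemma NF_f1 : finiteP P1. Proof. by case: NF => _ [h _]. Qed.
Lemma NF_f2 : finiteP P2. Proof. by case: NF => _ [_ [h _]]. Qed.

Lemma NF_f3 : finiteP P3.
Proof.
case: NF_f1 => s1 H1; case: NF_f2 => s2 H2.
have := @NF_lf3 (s1 ++ s2); case.
  move=> x; rewrite mem_cat => /orP [/H1 ?|/H2 ?]; [exact: NF_13|exact: NF_23].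
move=> t Ht; exists t => x; rewrite -Ht; split.
- move/NF_gen; apply: gen_mono => y [/H1 h|/H2 h]; by rewrite mem_cat h ?orbT.
- move=> h; apply/NF_gen; move: h; apply: gen_mono => y; rewrite mem_cat => /orP [/H1|/H2]; by [left|right].
Qed.
End NFparts.

Definition canon (G : groupType) (P0 : G -> Prop) (x : G) : G :=
  epsilon (inhabits (1 : G)) (fun r => exists c, P0 c /\ r = x * c).

Lemma canon_spec (G : groupType) (P0 : G -> Prop) x : P0 1 -> exists c, P0 c /\ canon P0 x = x * c.
Proof.
move=> P01; apply: (epsilon_spec (inhabits (1 : G)) (fun r => exists c, P0 c /\ r = x * c)).
by exists x, 1; rewrite mulg1.
Qed.

Lemma canon_eq (G : groupType) (P0 : G -> Prop) x y : is_subgroup P0 ->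
  (exists c, P0 c /\ y = x * c) -> canon P0 y = canon P0 x.
Proof.
move=> [_ [PM PV]] [c [Pc ->]]; rewrite /canon; congr epsilon.
apply: functional_extensionality => r; apply: propositional_extensionality; split.
- by case=> d [Pd ->]; exists (c * d); split; [apply: PM|rewrite mulgA].
- case=> d [Pd ->]; exists (c^-1 * d); split; first by apply: PM => //; apply: PV.
  by rewrite mulgA mulgK.
Qed.

Section Core.
Variables (G : groupType) (P0 P1 P2 P3 : G -> Prop).
Hypothesis NF : NF_fin P0 P1 P2 P3.

Let sP0 := NF_sP0 NF.
Let sP3 := NF_sP3 NF.
Let i13 := NF_13 NF.
Let i23 := NF_23 NF.
Let i01 := NF_01 NF.
Let i02 := NF_02 NF.
Let hP3 := gclosed_sub sP3.
Local Notation S := (subg hP3).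
Local Notation pi := (piS hP3).

Lemma val_pi x : P3 x -> val (pi x) = x.
Proof. by move=> Px; apply: val_piS; apply/propbE. Qed.

Lemma val_P3 (s : S) : P3 (val s).
Proof. by apply/propbE; apply: valP. Qed.

Lemma pi_val (s : S) : pi (val s) = s.
Proof. by apply: val_inj; rewrite val_pi //; apply: val_P3. Qed.

Lemma piM x y : P3 x -> P3 y -> pi (x * y) = pi x * pi y.
Proof.
move=> Px Py; case: (sP3) => _ [PM _].
by apply: val_inj; rewrite val_mul !val_pi //; apply: PM.
Qed.

Lemma pi_inj x y : P3 x -> P3 y -> pi x = pi y -> x = y.
Proof. by move=> Px Py E; rewrite -(val_pi Px) -(val_pi Py) E. Qed.

Lemma pi_emb (Q : G -> Prop) : incl_set Q P3 -> is_emb Q pi.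
Proof. move=> QP; split=> x y Qx Qy; [apply: piM|apply: pi_inj]; auto. Qed.

Lemma S_lf : locally_finite (fun _ : S => True).
Proof.
move=> s _; case: (NF_f3 NF) => t Ht.
apply: (@finite_sub _ _ (fun _ : S => True)) => //.
exists (map pi t) => x; split=> // _.
by rewrite -(pi_val x); apply: map_f; apply/Ht; apply: val_P3.
Qed.

Section Side.
Variables (H : groupType) (A : G -> Prop) (phi : G -> H) (I : H -> Prop) (g : H).
Hypotheses (sA : is_subgroup A) (P0A : incl_set P0 A) (AP3 : incl_set A P3)
  (em : is_emb A phi) (cr : coset_reps P0 phi I) (Ig : I g).

Definition Iy (s : S) : Prop :=
  (A (val s) /\ I (g * phi (val s))) \/ (~ A (val s) /\ val s = canon P0 (val s)).

Let em0 : is_emb P0 phi. Proof. exact: emb_restr em P0A. Qed.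

Lemma Iy_reps : coset_reps P0 pi Iy.
Proof.
case: (sA) => A1 [AM AV]; case: (sP0) => P01 [PM PV].
split; [|split].
- left; rewrite val_one; split=> //; by rewrite (emb1 sA em) mulg1.
- move=> h; set x := val h; have P3x : P3 x by apply: val_P3.
  case: (classic (A x)) => Ax.
  + have [r [c [Ir [Pc E]]]] := coset_ex cr (g * phi x).
    have Ax' : A (x * c^-1) by apply: AM => //; apply: P0A; apply: PV.
    exists (pi (x * c^-1)); split.
      left; rewrite val_pi; last exact: AP3.
      split=> //; rewrite (embM em) //; last by apply: P0A; apply: PV.
      by rewrite (embV sA em); [rewrite mulgA E mulgK|apply: P0A].
    have P3x' : P3 (x * c^-1) by apply: AP3.
    have P3c : P3 c by apply: AP3; apply: P0A.
    by exists c; split=> //; apply: val_inj; rewrite val_mul !val_pi // mulgVK.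
  + have [c [Pc Ec]] := canon_spec x P01.
    have nA : ~ A (canon P0 x) by rewrite Ec => Ac; apply: Ax; rewrite -(mulgK c x); apply: AM => //; apply: P0A; apply: PV.
    have P3c : P3 (canon P0 x) by rewrite Ec; case: (sP3) => _ [SM _]; apply: SM => //; apply: AP3; apply: P0A.
    exists (pi (canon P0 x)); split.
      right; rewrite val_pi //; split=> //; symmetry; apply: canon_eq => //.
      by exists c.
    exists c^-1; split; first by apply: PV.
    have P3c' : P3 c^-1 by apply: AP3; apply: P0A; apply: PV.
    by apply: val_inj; rewrite val_mul !val_pi // Ec mulgK.
- move=> s s' Is Is' [c [Pc E]].
  have Vs' : val s' = val s * c by rewrite E val_mul val_pi //; apply: AP3; apply: P0A.
  apply: val_inj; case: Is => [[As Igs]|[nAs Cs]].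
  + have As' : A (val s') by rewrite Vs'; apply: AM => //; apply: P0A.
    case: Is' => [[_ Igs']|[nAs' _]]; last by [].
    case: cr => _ [_ Un].
    have E2 : g * phi (val s) = g * phi (val s').
      apply: Un => //; exists c; split=> //; by rewrite Vs' (embM em) ?mulgA //; apply: P0A.
    case: em => _ eI; apply: eI => //; exact: mulgI E2.
  + have nAs' : ~ A (val s').
      by rewrite Vs' => Ac; apply: nAs; rewrite -(mulgK c (val s)); apply: AM => //; apply: P0A; apply: PV.
    case: Is' => [[As' _]|[_ Cs']]; first by [].
    have h : canon P0 (val s') = canon P0 (val s) by apply: canon_eq => //; exists c.
    exact: (etrans Cs (etrans (esym h) (esym Cs'))).
Qed.

Lemma Iy_pi x : A x -> I (g * phi x) -> Iy (pi x).
Proof. by move=> Ax Ix; left; rewrite val_pi //; apply: AP3. Qed.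

End Side.

Lemma side_calc (H : groupType) (A : G -> Prop) (phi : G -> H) g a1 v11 a m11 m12 v12 :
  is_subgroup A -> incl_set P0 A -> is_emb A phi ->
  A a1 -> P0 v11 -> A a -> P0 m11 -> v12 = g * phi a1 ->
  m12 * phi m11 = v12 * phi v11 * phi a ->
  m12 = g * phi (a1 * v11 * a * m11^-1) /\ A (a1 * v11 * a * m11^-1).
Proof.
move=> sA P0A em Aa1 Pv Aa Pm Ev Em; case: (sA) => _ [AM AV].
have Av : A v11 by apply: P0A.
have Am : A m11 by apply: P0A.
have Am' : A m11^-1 by apply: AV.
have Aa1v : A (a1 * v11) by apply: AM.
have Aa1va : A (a1 * v11 * a) by apply: AM.
split; last by apply: AM.
rewrite !(embM em) // (embV sA em) //.
by rewrite -[m12](mulgK (phi m11)) Em Ev !mulgA.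
Qed.

Variables (A1 A2 : G -> Prop) (H1 H2 : groupType) (phi1 : G -> H1) (phi2 : G -> H2)
  (I1 : H1 -> Prop) (I2 : H2 -> Prop).
Hypotheses (sA1 : is_subgroup A1) (sA2 : is_subgroup A2)
  (P0A1 : incl_set P0 A1) (P0A2 : incl_set P0 A2)
  (A1P1 : incl_set A1 P1) (A2P2 : incl_set A2 P2)
  (em1 : is_emb A1 phi1) (em2 : is_emb A2 phi2)
  (cr1 : coset_reps P0 phi1 I1) (cr2 : coset_reps P0 phi2 I2).

Theorem core l l' u v v' : goodl A1 A2 l -> goodl A1 A2 l' -> prodG l = prodG l' ->
  inUx P0 I1 I2 u ->
  genrel P0 phi1 phi2 I1 I2 (wordE phi1 phi2 l) u v ->
  genrel P0 phi1 phi2 I1 I2 (wordE phi1 phi2 l') u v' -> v = v'.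
Proof.
have A1P3 : incl_set A1 P3 by move=> x /A1P1 /i13.
have A2P3 : incl_set A2 P3 by move=> x /A2P2 /i23.
have em01 : is_emb P0 phi1 by apply: emb_restr em1 P0A1.
have em02 : is_emb P0 phi2 by apply: emb_restr em2 P0A2.
case: u => [[g0 g1] g2] gl gl' El Uu; have [Pg0 [Ig1 Ig2]] := Uu; simpl in *.
pose Iy1 := Iy A1 phi1 I1 g1; pose Iy2 := Iy A2 phi2 I2 g2.
have cy1 : coset_reps P0 pi Iy1 by apply: Iy_reps.
have cy2 : coset_reps P0 pi Iy2 by apply: Iy_reps.
have p1 : is_emb P1 pi by apply: pi_emb.
have p2 : is_emb P2 pi by apply: pi_emb.
have p0 : is_emb P0 pi by apply: pi_emb => x /i01 /i13.
have ty : is_try P0 P1 P2 pi pi Iy1 Iy2.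
  by split; [exact: S_lf|split; [exact: S_lf|split=> //; split=> //]].
have [f hf] := NF_ex NF ty.
have [_ [hM [hj1 hj2]]] := hf.
pose Tr (v : Ux G H1 H2) (w : Ux G S S) := w.1.1 = v.1.1 /\ exists a1 a2, A1 a1 /\ A2 a2 /\
   v.1.2 = g1 * phi1 a1 /\ w.1.2 = pi a1 /\ v.2 = g2 * phi2 a2 /\ w.2 = pi a2.
have TrU : forall v w, inUx P0 I1 I2 v -> Tr v w -> inUx P0 Iy1 Iy2 w.
  move=> [[v0 v1] v2] [[w0 w1] w2] [Pv0 [Iv1 Iv2]] [/= -> [a1 [a2 [Aa1 [Aa2 [E1 [-> [E2 ->]]]]]]]].
  split=> //=; split; left; rewrite val_pi; [split=> //; by rewrite -E1| exact: A1P3| split=> //; by rewrite -E2|exact: A2P3].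
have Trinj : forall v v' w, Tr v w -> Tr v' w -> v = v'.
  move=> [[v0 v1] v2] [[v0' v1'] v2'] [[w0 w1] w2]; rewrite /Tr /=.
  move=> [E0 [a1 [a2 [Aa1 [Aa2 [Ev1 [Ew1 [Ev2 Ew2]]]]]]]] [E0' [b1 [b2 [Ab1 [Ab2 [Ev1' [Ew1' [Ev2' Ew2']]]]]]]].
  have e1 : a1 = b1 by apply: pi_inj; [exact: A1P3|exact: A1P3|rewrite -Ew1 -Ew1'].
  have e2 : a2 = b2 by apply: pi_inj; [exact: A2P3|exact: A2P3|rewrite -Ew2 -Ew2'].
  by rewrite -E0 -E0' Ev1 Ev1' Ev2 Ev2' e1 e2.
have claim : forall k v v' w, goodl A1 A2 k -> inUx P0 I1 I2 v -> Tr v w ->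
    genrel P0 phi1 phi2 I1 I2 (wordE phi1 phi2 k) v v' -> Tr v' (f (prodG k) w).
  clear gl gl' El; elim=> [|z k IH] v1 v1' w /=.
    move=> _ Uv Tw ->; rewrite (hom_one (sP0) p1 cy1 i01 hf) //; exact: TrU Tw.
  move=> [Hz Hl] Uv Tw [m [Hm Hr]].
  have Uw := TrU _ _ Uv Tw.
  have P3z : P3 (zval z) by case: z Hz {Hm} => x Hx; [exact: A1P3|exact: A2P3].
  have P3l : P3 (prodG k) by apply: prodG_in Hl.
  rewrite hM //; apply: (IH m) => //.
    by case: z Hz Hm {P3z} => x Hx Hm; [exact: j1_U Uv Hm|exact: j2_U Uv Hm].
  case: z Hz Hm {P3z} => a Ha /= Hm.
  - case: v1 Uv Tw Hm => [[v0 v1] v2] [Pv0 [Iv1 Iv2]] [Ew0 [a1 [a2 [Aa1 [Aa2 [Ev1 [Ew1 [Ev2 Ew2]]]]]]]].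
    case: m Hr => [[m0 m1] m2] Hr [/= Em2 [Pm0 [Im1 Em]]]; simpl in *.
    have [Em1 Aa1'] := side_calc sA1 P0A1 em1 Aa1 Pv0 Ha Pm0 Ev1 Em.
    set a1' := a1 * v0 * a * m0^-1 in Em1 Aa1'.
    have J : j1rel P0 pi Iy1 (pi a) w ((m0, pi a1'), w.2).
      rewrite /j1rel /=; split=> //; split=> //; split.
        by apply: Iy_pi => //; rewrite -Em1.
      have Pa1 : P3 a1 by apply: A1P3.
      have Pm0' : P3 m0 by apply: i13; apply: i01.
      have Pv0' : P3 v0 by apply: i13; apply: i01.
      have Pa : P3 a by apply: A1P3.
      have Pa1' : P3 a1' by apply: A1P3.
      have Pa1v : P3 (a1 * v0) by case: sP3 => _ [SM _]; apply: SM.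
      rewrite Ew1 Ew0 -(piM Pa1' Pm0') -(piM Pa1 Pv0') -(piM Pa1v Pa); congr pi; by rewrite /a1' mulgVK.
    have -> := j1_fun sP0 p0 cy1 (hj1 _ (A1P1 Ha) _ Uw) J.
    split=> //; exists a1', a2; do !split=> //; by rewrite Em2.
  - case: v1 Uv Tw Hm => [[v0 v1] v2] [Pv0 [Iv1 Iv2]] [Ew0 [a1 [a2 [Aa1 [Aa2 [Ev1 [Ew1 [Ev2 Ew2]]]]]]]].
    case: m Hr => [[m0 m1] m2] Hr [/= Em2 [Pm0 [Im2 Em]]]; simpl in *.
    have [Em1 Aa2'] := side_calc sA2 P0A2 em2 Aa2 Pv0 Ha Pm0 Ev2 Em.
    set a2' := a2 * v0 * a * m0^-1 in Em1 Aa2'.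
    have J : j2rel P0 pi Iy2 (pi a) w ((m0, w.1.2), pi a2').
      rewrite /j2rel /=; split=> //; split=> //; split.
        by apply: Iy_pi => //; rewrite -Em1.
      have Pa1 : P3 a2 by apply: A2P3.
      have Pm0' : P3 m0 by apply: i13; apply: i01.
      have Pv0' : P3 v0 by apply: i13; apply: i01.
      have Pa : P3 a by apply: A2P3.
      have Pa1' : P3 a2' by apply: A2P3.
      have Pa1v : P3 (a2 * v0) by case: sP3 => _ [SM _]; apply: SM.
      rewrite Ew2 Ew0 -(piM Pa1' Pm0') -(piM Pa1 Pv0') -(piM Pa1v Pa); congr pi; by rewrite /a2' mulgVK.
    have -> := j2_fun sP0 p0 cy2 (hj2 _ (A2P2 Ha) _ Uw) J.
    split=> //; exists a1, a2'; do !split=> //; by rewrite Em2.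
have pi1 : pi 1 = 1.
  by apply: val_inj; rewrite val_pi //; case: sP3.
pose w0 : Ux G S S := ((g0, 1), 1).
have T0 : Tr ((g0, g1), g2) w0.
  split=> //; exists 1, 1; rewrite (emb1 sA1 em1) (emb1 sA2 em2) !mulg1 pi1.
  by case: sA1 => ? _; case: sA2 => ? _.
move=> Hv Hv'.
have T1 := claim _ _ _ _ gl Uu T0 Hv.
have T2 := claim _ _ _ _ gl' Uu T0 Hv'.
rewrite El in T1; exact: Trinj T1 T2.
Qed.

End Core.


Section Constr.
Variables (G : groupType) (P0 P1 P2 P3 : G -> Prop).
Hypothesis NF : NF_fin P0 P1 P2 P3.
Variables (A1 A2 : G -> Prop) (H1 H2 : groupType) (phi1 : G -> H1) (phi2 : G -> H2)
  (I1 : H1 -> Prop) (I2 : H2 -> Prop).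
Hypotheses (sA1 : is_subgroup A1) (sA2 : is_subgroup A2)
  (P0A1 : incl_set P0 A1) (P0A2 : incl_set P0 A2)
  (A1P1 : incl_set A1 P1) (A2P2 : incl_set A2 P2)
  (em1 : is_emb A1 phi1) (em2 : is_emb A2 phi2)
  (cr1 : coset_reps P0 phi1 I1) (cr2 : coset_reps P0 phi2 I2).

Local Notation Q3 := (gen (unionP A1 A2)).
Local Notation GR := (genrel P0 phi1 phi2 I1 I2).

Definition lch (a : G) : seq (G + G) :=
  epsilon (inhabits [::]) (fun l => goodl A1 A2 l /\ prodG l = a).

Lemma lch_spec a : Q3 a -> goodl A1 A2 (lch a) /\ prodG (lch a) = a.
Proof.
move=> Qa; apply: (epsilon_spec (inhabits [::]) (fun l => goodl A1 A2 l /\ prodG l = a)).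
exact: decomp.
Qed.

Definition fcon (a : G) (u : Ux G H1 H2) : Ux G H1 H2 :=
  epsilon (inhabits u) (fun v => GR (wordE phi1 phi2 (lch a)) u v).

Lemma fcon_spec a u : GR (wordE phi1 phi2 (lch a)) u (fcon a u).
Proof.
apply: (epsilon_spec (inhabits u) (fun v => GR (wordE phi1 phi2 (lch a)) u v)).
exact: GR_tot.
Qed.

Let coreL := core NF sA1 sA2 P0A1 P0A2 A1P1 A2P2 em1 em2 cr1 cr2.

Lemma fcon_eq a l u v : Q3 a -> goodl A1 A2 l -> prodG l = a -> inUx P0 I1 I2 u ->
  GR (wordE phi1 phi2 l) u v -> fcon a u = v.
Proof.
move=> Qa gl pl Uu Hv; have [g1 p1] := lch_spec Qa.
apply: (coreL g1 gl _ Uu (fcon_spec a u) Hv); by rewrite p1 pl.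
Qed.

Lemma constr_hom : hom_to_Gx P0 phi1 phi2 I1 I2 A1 A2 Q3 fcon.
Proof.
split; [|split; [|split]].
- move=> a Qa; exists (wordE phi1 phi2 (lch a)) => u _; exact: fcon_spec.
- move=> a b Qa Qb u Uu.
  have [ga pa] := lch_spec Qa; have [gb pb] := lch_spec Qb.
  apply: (fcon_eq (l := lch a ++ lch b)); first by apply: gen_mul.
  + exact: goodl_cat.
  + by rewrite prodG_cat pa pb.
  + done.
  + rewrite wordE_cat; apply: GR_cat; first exact: fcon_spec.
    exact: fcon_spec.
- move=> g Ag u Uu; have [v Jv] := j1_tot cr1 (phi1 g) u (H2:=H2).
  suff -> : fcon g u = v by [].
  apply: (fcon_eq (l := [:: inl g])) => //.
  - by apply: gen_in; left.
  - by rewrite /= mulg1.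
  - by exists v.
- move=> g Ag u Uu; have [v Jv] := j2_tot cr2 (phi2 g) u (H1:=H1).
  suff -> : fcon g u = v by [].
  apply: (fcon_eq (l := [:: inr g])) => //.
  - by apply: gen_in; right.
  - by rewrite /= mulg1.
  - by exists v.
Qed.

End Constr.

Lemma constr_ex (G : groupType) (P0 P1 P2 P3 : G -> Prop) (NF : NF_fin P0 P1 P2 P3)
  (A1 A2 : G -> Prop) (H1 H2 : groupType) (phi1 : G -> H1) (phi2 : G -> H2)
  (I1 : H1 -> Prop) (I2 : H2 -> Prop) :
  is_subgroup A1 -> is_subgroup A2 -> incl_set P0 A1 -> incl_set P0 A2 ->
  incl_set A1 P1 -> incl_set A2 P2 -> is_emb A1 phi1 -> is_emb A2 phi2 ->
  coset_reps P0 phi1 I1 -> coset_reps P0 phi2 I2 ->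
  exists f, hom_to_Gx P0 phi1 phi2 I1 I2 A1 A2 (gen (unionP A1 A2)) f.
Proof. move=> *; eexists; apply: (constr_hom NF); eassumption. Qed.

Lemma lf_mono (G : groupType) (P Q : G -> Prop) : locally_finite P -> incl_set Q P -> locally_finite Q.
Proof. by move=> lf QP s Hs; apply: lf => x /Hs /QP. Qed.

Lemma part2 (G : groupType) (P0 P1 P2 P3 : G -> Prop) :
  NF_fin P0 P1 P2 P3 ->
  (forall P1' P2' P3' : G -> Prop,
     is_subgroup P1' -> is_subgroup P2' -> is_subgroup P3' ->
     incl_set P0 P1' -> incl_set P1' P1 ->
     incl_set P0 P2' -> incl_set P2' P2 ->
     incl_set (unionP P1' P2') P3' -> incl_set P3' P3 ->
     NF_rfin P0 P1' P2' P3').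
Proof.
move=> NF P1' P2' P3' s1 s2 s3 i01 i11 i02 i22 iu3 i33.
have sP0 := NF_sP0 NF; have sP3 := NF_sP3 NF.
have i13 := NF_13 NF; have i23 := NF_23 NF.
have Q3P3 : incl_set (gen (unionP P1' P2')) P3.
  apply: gen_sub => // x [/i11/i13|/i22/i23] //.
have lf3 := NF_lf3 NF.
split=> //; split; first by apply: lf_mono lf3 i33.
split=> //; split=> //; split; first by move=> x h; apply: iu3; left.
split; first by move=> x h; apply: iu3; right.
split; first by case: NF.
split; first by apply: finite_sub (NF_f1 NF) i11.
split; first by apply: finite_sub (NF_f2 NF) i22.
do 3 (split=> //); split; first exact: gen_subgroup.
split; first exact: lf_mono lf3 Q3P3.
do 2 (split=> //); split; first by move=> x h; apply: gen_in; left.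
split; first by move=> x h; apply: gen_in; right.
split; first by [].
split.
  move=> H1 H2 e1 e2 I1 I2 [_ [_ [em1 [em2 [cr1 cr2]]]]].
  by apply: (constr_ex NF).
move=> a Qa na; have [H1 [H2 [e1 [e2 [I1 [I2 [ty [f [hf [u [Uu Hu]]]]]]]]]]] := NF_sep NF (Q3P3 _ Qa) na.
exists H1, H2, e1, e2, I1, I2; split.
  case: ty => l1 [l2 [em1 [em2 cr]]]; do 2 (split=> //); split; first exact: emb_restr em1 i11.
  by split; first exact: emb_restr em2 i22.
exists f; split; last by exists u.
case: hf => h1 [h2 [h3 h4]]; split; first by move=> b /Q3P3; apply: h1.
split; first by move=> b c /Q3P3 Hb /Q3P3 Hc; apply: h2.
by split=> g Hg; [apply: h3; apply: i11|apply: h4; apply: i22].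
Qed.


Definition sw (G H1 H2 : groupType) (u : Ux G H1 H2) : Ux G H2 H1 := ((u.1.1, u.2), u.1.2).
Lemma swK (G H1 H2 : groupType) (u : Ux G H1 H2) : sw (sw u) = u.
Proof. by case: u => [[a b] c]. Qed.
Definition swapw (H1 H2 : groupType) (w : H1 + H2) : H2 + H1 :=
  match w with inl h => inr h | inr h => inl h end.

Section Swap.
Variables (G H1 H2 : groupType) (P0 P1 P2 P3 : G -> Prop) (e1 : G -> H1) (e2 : G -> H2)
  (I1 : H1 -> Prop) (I2 : H2 -> Prop).

Lemma sw_U u : inUx P0 I1 I2 u -> inUx P0 I2 I1 (sw u).
Proof. by case: u => [[a b] c] [? [? ?]]. Qed.

Lemma sw_GR ws u v : genrel P0 e1 e2 I1 I2 ws u v ->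
  genrel P0 e2 e1 I2 I1 (map (@swapw _ _) ws) (sw u) (sw v).
Proof.
elim: ws u => [|w ws IH] u /=; first by move=> ->.
move=> [m [Hm Hr]]; exists (sw m); split; last exact: IH.
by case: w Hm => g; case: u => [[a b] c]; case: m {Hr} => [[a' b'] c'].
Qed.

Lemma sw_hom f : hom_to_Gx P0 e1 e2 I1 I2 P1 P2 P3 f ->
  hom_to_Gx P0 e2 e1 I2 I1 P2 P1 P3 (fun a u => sw (f a (sw u))).
Proof.
case=> [h1 [h2 [h3 h4]]]; split; [|split; [|split]].
- move=> a Pa; case: (h1 a Pa) => ws Hws; exists (map (@swapw _ _) ws) => u Uu.
  rewrite -{1}(swK u); apply: sw_GR; apply: Hws; by move: Uu; case: u => [[? ?] ?] [? [? ?]].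
- move=> a b Pa Pb u Uu; rewrite swK h2 //.
  by move: Uu; case: u => [[? ?] ?] [? [? ?]].
- move=> g Pg u Uu; have Uu' : inUx P0 I1 I2 (sw u) by move: Uu; case: u => [[? ?] ?] [? [? ?]].
  move: (h4 g Pg _ Uu'); case: u {Uu Uu'} => [[a b] c]; case: (f g _) => [[a' b'] c'] //.
- move=> g Pg u Uu; have Uu' : inUx P0 I1 I2 (sw u) by move: Uu; case: u => [[? ?] ?] [? [? ?]].
  move: (h3 g Pg _ Uu'); case: u {Uu Uu'} => [[a b] c]; case: (f g _) => [[a' b'] c'] //.
Qed.

Lemma sw_try : is_try P0 P1 P2 e1 e2 I1 I2 -> is_try P0 P2 P1 e2 e1 I2 I1.
Proof. by case=> [l1 [l2 [m1 [m2 [c1 c2]]]]]. Qed.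

End Swap.

Lemma part1 (G : groupType) (P0 P1 P2 P3 : G -> Prop) :
  NF_fin P0 P1 P2 P3 -> NF_fin P0 P2 P1 P3.
Proof.
move=> NF; case: (NF) => f0 [f1 [f2 [s0 [s1 [s2 [s3 [lf [i01 [i02 [i13 [i23 [gb [ex sep]]]]]]]]]]]]].
do 12 (split=> //).
split.
  move=> x; rewrite gb; apply: gen_ext => y; rewrite /unionP; tauto.
split.
  move=> H1 H2 e1 e2 I1 I2 ty; have [f hf] := ex _ _ _ _ _ _ (sw_try ty).
  by eexists; apply: (sw_hom hf).
move=> a Pa na; have [H1 [H2 [e1 [e2 [I1 [I2 [ty [f [hf [u [Uu Hu]]]]]]]]]]] := sep a Pa na.
exists H2, H1, e2, e1, I2, I1; split; first exact: sw_try.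
eexists; split; first exact: (sw_hom hf).
exists (sw u); split; first exact: sw_U.
by rewrite swK => E; apply: Hu; rewrite -(swK (f a u)) E swK.
Qed.


Definition mapf (G' G : groupType) (f1 f2 : G' -> G) (l : seq (G' + G')) : seq (G + G) :=
  map (fun z => match z with inl x => inl (f1 x) | inr x => inr (f2 x) end) l.

Lemma mapf_cat (G' G : groupType) (f1 f2 : G' -> G) l1 l2 :
  mapf f1 f2 (l1 ++ l2) = mapf f1 f2 l1 ++ mapf f1 f2 l2.
Proof. exact: map_cat. Qed.

Lemma goodl_mapf (G' G : groupType) (f1 f2 : G' -> G) Q1 Q2 (P1 P2 : G -> Prop) l :
  (forall x, Q1 x -> P1 (f1 x)) -> (forall x, Q2 x -> P2 (f2 x)) ->
  goodl Q1 Q2 l -> goodl P1 P2 (mapf f1 f2 l).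
Proof. move=> h1 h2; elim: l => [|[x|x] l IH] //= [Hx Hl]; split; auto. Qed.

Lemma wordE_mapf (G' G H1 H2 : groupType) (f1 f2 : G' -> G) (e1 : G -> H1) (e2 : G -> H2) l :
  wordE e1 e2 (mapf f1 f2 l) = wordE (fun x => e1 (f1 x)) (fun x => e2 (f2 x)) l.
Proof. by elim: l => [|[x|x] l IH] //=; rewrite IH. Qed.

Section Transfer.
Variables (G G' : groupType) (P0 P1 P2 P3 : G -> Prop) (Q0 Q1 Q2 Q3 : G' -> Prop)
  (f0 f1 f2 : G' -> G).
Hypotheses (NFP : NF_fin P0 P1 P2 P3) (NFQ : NF_fin Q0 Q1 Q2 Q3)
  (is0 : is_iso_onto Q0 P0 f0) (is1 : is_iso_onto Q1 P1 f1) (is2 : is_iso_onto Q2 P2 f2)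
  (c1 : forall x, Q0 x -> f1 x = f0 x) (c2 : forall x, Q0 x -> f2 x = f0 x).

Lemma emb_comp (H : groupType) (Q P : _ -> Prop) (f : G' -> G) (e : G -> H) :
  is_iso_onto Q P f -> is_emb P e -> is_emb Q (fun x => e (f x)).
Proof.
move=> [[fM fI] [fP _]] [eM eI]; split=> x y Qx Qy.
- by rewrite fM // eM //; apply: fP.
- by move=> E; apply: fI => //; apply: eI => //; apply: fP.
Qed.

Lemma coset_comp (H : groupType) (f : G' -> G) (e : G -> H) (I : H -> Prop) :
  (forall x, Q0 x -> f x = f0 x) -> coset_reps P0 e I -> coset_reps Q0 (fun x => e (f x)) I.
Proof.
move=> cf [I1 [Ex Un]]; have [_ [fP fS]] := is0; split=> //; split.
- move=> h; have [r [Ir [g0 [Pg ->]]]] := Ex h; have [x [Qx <-]] := fS _ Pg.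
  by exists r; split=> //; exists x; rewrite cf.
- move=> r r' Ir Ir' [x [Qx E]]; apply: Un => //; exists (f0 x); split; [exact: fP | by rewrite E cf].
Qed.

Theorem transfer l l' : goodl Q1 Q2 l -> goodl Q1 Q2 l' -> prodG l = prodG l' ->
  prodG (mapf f1 f2 l) = prodG (mapf f1 f2 l').
Proof.
move=> gl gl' El.
have [_ [fP1 _]] := is1; have [_ [fP2 _]] := is2; have [_ [fP0 fS0]] := is0.
have gm := goodl_mapf fP1 fP2 gl; have gm' := goodl_mapf fP1 fP2 gl'.
have sP3 := NF_sP3 NFP; have sP0 := NF_sP0 NFP.
have i13 := NF_13 NFP; have i23 := NF_23 NFP; have i01 := NF_01 NFP.
set m := prodG (mapf f1 f2 l); set m' := prodG (mapf f1 f2 l').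
have Pm : P3 m by apply: prodG_in gm.
have Pm' : P3 m' by apply: prodG_in gm'.
apply: NNPP => ne.
have Pc : P3 (m * m'^-1) by case: sP3 => _ [SM SV]; apply: SM => //; apply: SV.
have nc : m * m'^-1 <> 1 by move/mulg1_eq => E; apply: ne; rewrite -(invgK m) E invgK.
have [H1 [H2 [e1 [e2 [I1 [I2 [ty [f [hf [u [Uu Hu]]]]]]]]]]] := NF_sep NFP Pc nc.
have [_ [_ [em1 [em2 [cr1 cr2]]]]] := ty.
have em01 : is_emb P0 e1 by apply: emb_restr em1 i01.
have em02 : is_emb P0 e2 by apply: emb_restr em2 (NF_02 NFP).
pose phi1 := fun x => e1 (f1 x); pose phi2 := fun x => e2 (f2 x).
have pm1 : is_emb Q1 phi1 by apply: emb_comp is1 em1.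
have pm2 : is_emb Q2 phi2 by apply: emb_comp is2 em2.
have pc1 : coset_reps Q0 phi1 I1 by apply: coset_comp.
have pc2 : coset_reps Q0 phi2 I2 by apply: coset_comp.
have sQ1 := NF_sP1 NFQ; have sQ2 := NF_sP2 NFQ.
have coreQ := core NFQ sQ1 sQ2 (NF_01 NFQ) (NF_02 NFQ) (fun x h => h) (fun x h => h) pm1 pm2 pc1 pc2.
pose T (w : Ux G' H1 H2) : Ux G H1 H2 := ((f0 w.1.1, w.1.2), w.2).
have TGR : forall ws w w', inUx Q0 I1 I2 w -> genrel Q0 phi1 phi2 I1 I2 ws w w' ->
    genrel P0 e1 e2 I1 I2 ws (T w) (T w').
  elim=> [|z ws IH] w w' /=; first by move=> _ ->.
  move=> Uw [k [Hk Hr]]; exists (T k).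
  have Uk : inUx Q0 I1 I2 k by case: z Hk {Hr} => g Hk; [apply: j1_U Uw Hk|apply: j2_U Uw Hk].
  split; last exact: IH.
  move: Hk Uk; case: w Uw {Hr} => [[a b] c] [Qa [Ib Ic]]; case: k => [[a' b'] c'] Hk [Qa' _].
  simpl in Qa, Qa', Ib, Ic.
  case: z Hk => g [/= E1 [_ [Ib' E]]]; rewrite /T /=.
  - rewrite /j1rel /=; split=> //; split; first exact: fP0.
    by split=> //; rewrite -(c1 Qa) -(c1 Qa').
  - rewrite /j2rel /=; split=> //; split; first exact: fP0.
    by split=> //; rewrite -(c2 Qa) -(c2 Qa').
case: u Uu Hu => [[u0 u1] u2] Uu Hu; have [Pu0 [Iu1 Iu2]] := Uu.
have [x0 [Qx0 Ex0]] := fS0 _ Pu0.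
set u' : Ux G' H1 H2 := ((x0, u1), u2).
have Uu' : inUx Q0 I1 I2 u' by [].
have Tu : T u' = ((u0, u1), u2) by rewrite /T /= Ex0.
have [v Hv] := GR_tot pc1 pc2 (wordE phi1 phi2 l) u'.
have [v' Hv'] := GR_tot pc1 pc2 (wordE phi1 phi2 l') u'.
have Evv := coreQ _ _ _ _ _ gl gl' El Uu' Hv Hv'; subst v'.
have G1 := TGR _ _ _ Uu' Hv; have G2 := TGR _ _ _ Uu' Hv'.
rewrite Tu -wordE_mapf in G1; rewrite Tu -wordE_mapf in G2.
have H1' := HG sP0 em1 cr1 i01 sP3 i13 i23 hf gm Uu.
have H2' := HG sP0 em1 cr1 i01 sP3 i13 i23 hf gm' Uu.
have E1 := GR_fun sP0 em01 em02 cr1 cr2 H1' G1.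
have E2 := GR_fun sP0 em01 em02 cr1 cr2 H2' G2.
have [h1 [hM _]] := hf.
have [wsc Hc] := h1 _ Pc.
have Ucu := GR_U Uu (Hc _ Uu).
have Ecm : f m' (f (m * m'^-1) ((u0, u1), u2)) = f m' ((u0, u1), u2).
  by rewrite -hM // mulgVK E1 E2.
apply: Hu; apply: (GR_inj sP0 em01 em02 cr1 cr2 Ucu Uu _ H2').
by rewrite -Ecm; apply: (HG sP0 em1 cr1 i01 sP3 i13 i23 hf gm' Ucu).
Qed.

End Transfer.


Definition ginv (G' G : groupType) (Q : G' -> Prop) (f : G' -> G) (y : G) : G' :=
  epsilon (inhabits 1) (fun x => Q x /\ f x = y).

Section Ginv.
Variables (G' G : groupType) (Q : G' -> Prop) (P : G -> Prop) (f : G' -> G).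
Hypothesis (iso : is_iso_onto Q P f).

Lemma ginv_spec y : P y -> Q (ginv Q f y) /\ f (ginv Q f y) = y.
Proof.
move=> Py; apply: (epsilon_spec (inhabits 1) (fun x => Q x /\ f x = y)).
by case: iso => _ [_ S]; apply: S.
Qed.

Lemma ginv_f x : Q x -> ginv Q f (f x) = x.
Proof.
move=> Qx; have [_ [fP _]] := iso; have [Qg Eg] := ginv_spec (fP _ Qx).
by case: iso => [[_ fI] _]; apply: fI.
Qed.

Lemma ginv_iso : is_subgroup Q -> is_iso_onto P Q (ginv Q f).
Proof.
move=> [_ [QM _]]; have [[fM fI] [fP fS]] := iso.
split; [split|split].
- move=> a b Pa Pb; have [Qa Ea] := ginv_spec Pa; have [Qb Eb] := ginv_spec Pb.
  by rewrite -{1}Ea -{1}Eb -fM // ginv_f //; apply: QM.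
- move=> a b Pa Pb E; have [_ Ea] := ginv_spec Pa; have [_ Eb] := ginv_spec Pb.
  by rewrite -Ea -Eb E.
- by move=> y Py; case: (ginv_spec Py).
- by move=> x Qx; exists (f x); split; [apply: fP|apply: ginv_f].
Qed.
End Ginv.

Lemma mapf_inv (G' G : groupType) (Q1 Q2 : G' -> Prop) (P1 P2 : G -> Prop) (f1 f2 : G' -> G) l :
  is_iso_onto Q1 P1 f1 -> is_iso_onto Q2 P2 f2 -> goodl Q1 Q2 l ->
  mapf (ginv Q1 f1) (ginv Q2 f2) (mapf f1 f2 l) = l.
Proof.
move=> i1 i2; elim: l => [|[x|x] l IH] //= [Hx Hl]; rewrite IH //; by [rewrite (ginv_f i1) | rewrite (ginv_f i2)].
Qed.

Lemma part3 (G : groupType) (P0 P1 P2 P3 : G -> Prop) :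
  NF_fin P0 P1 P2 P3 ->
  (forall (G' : groupType) (Q0 Q1 Q2 Q3 : G' -> Prop) (f0 f1 f2 : G' -> G),
     NF_fin Q0 Q1 Q2 Q3 -> generated_by Q3 Q1 Q2 ->
     is_iso_onto Q0 P0 f0 -> is_iso_onto Q1 P1 f1 -> is_iso_onto Q2 P2 f2 ->
     (forall x, Q0 x -> f1 x = f0 x) -> (forall x, Q0 x -> f2 x = f0 x) ->
     exists f3 : G' -> G,
       is_emb Q3 f3 /\ (forall x, Q3 x -> P3 (f3 x)) /\
       (forall x, Q1 x -> f3 x = f1 x) /\ (forall x, Q2 x -> f3 x = f2 x)).
Proof.
move=> NFP G' Q0 Q1 Q2 Q3 f0 f1 f2 NFQ gQ is0 is1 is2 c1 c2.
have sQ0 := NF_sP0 NFQ; have sQ1 := NF_sP1 NFQ; have sQ2 := NF_sP2 NFQ.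
have iQ01 := NF_01 NFQ; have iQ02 := NF_02 NFQ.
have T1 := transfer NFP NFQ is0 is1 is2 c1 c2.
have js0 := ginv_iso is0 sQ0; have js1 := ginv_iso is1 sQ1; have js2 := ginv_iso is2 sQ2.
have cc : forall (Qi : G' -> Prop) (fi : G' -> G) Pi, is_iso_onto Qi Pi fi -> incl_set Q0 Qi ->
    (forall x, Q0 x -> fi x = f0 x) -> forall y, P0 y -> ginv Qi fi y = ginv Q0 f0 y.
  move=> Qi fi Pi isi i0i ci y Py; have [Qx Ex] := ginv_spec is0 Py.
  by rewrite -{1}Ex -ci // (ginv_f isi) //; apply: i0i.
have T2 := transfer NFQ NFP js0 js1 js2 (cc _ _ _ is1 iQ01 c1) (cc _ _ _ is2 iQ02 c2).
have [_ [fP1 _]] := is1; have [_ [fP2 _]] := is2.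
pose f3 a := prodG (mapf f1 f2 (lch Q1 Q2 a)).
have ls : forall a, Q3 a -> goodl Q1 Q2 (lch Q1 Q2 a) /\ prodG (lch Q1 Q2 a) = a.
  by move=> a /gQ Qa; apply: lch_spec.
have sP3 := NF_sP3 NFP.
have one : forall z, (match z with inl x => Q1 x | inr x => Q2 x end) -> Q3 (zval z) ->
    f3 (zval z) = zval (match z with inl x => inl (f1 x) | inr x => inr (f2 x) end : G + G).
  move=> z Hz Qz; have [g p] := ls _ Qz.
  have Hz1 : goodl Q1 Q2 [:: z] by case: z Hz {Qz g p}.
  have pz : prodG (lch Q1 Q2 (zval z)) = prodG [:: z] by rewrite p /= mulg1.
  by have := T1 _ _ g Hz1 pz; rewrite /f3 /= mulg1 => ->; case: z {Hz Qz g p Hz1 pz}.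
exists f3; split; [split|split; [|split]].
- move=> a b Qa Qb; have [ga pa] := ls _ Qa; have [gb pb] := ls _ Qb.
  have Qab : Q3 (a * b) by case: (NF_sP3 NFQ) => _ [M _]; apply: M.
  have [gab pab] := ls _ Qab.
  rewrite /f3 -prodG_cat -mapf_cat; apply: T1 => //; first exact: goodl_cat.
  by rewrite prodG_cat pa pb.
- move=> a b Qa Qb E; have [ga pa] := ls _ Qa; have [gb pb] := ls _ Qb.
  have := T2 _ _ (goodl_mapf fP1 fP2 ga) (goodl_mapf fP1 fP2 gb) E.
  by rewrite (mapf_inv is1 is2 ga) (mapf_inv is1 is2 gb) pa pb.
- move=> x Qx; have [g _] := ls _ Qx; apply: prodG_in (goodl_mapf fP1 fP2 g) => //.
    exact: NF_13 NFP.
  exact: NF_23 NFP.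
- move=> x Qx; have Q3x : Q3 x by apply/gQ; apply: gen_in; left.
  exact: (one (inl x)).
- move=> x Qx; have Q3x : Q3 x by apply/gQ; apply: gen_in; right.
  exact: (one (inr x)).
Qed.


Section Words.
Variable G : groupType.

Definition ev (s : seq G) (w : word) : G := weval (fun i => nth 1 s i) w.

Fixpoint clean (n : nat) (w : word) : word :=
  match w with
  | WVar i => if (i < n)%N then WVar i else WOne
  | WOne => WOne
  | WMul w1 w2 => WMul (clean n w1) (clean n w2)
  | WInv w1 => WInv (clean n w1)
  end.

Fixpoint shift (n k : nat) (w : word) : word :=
  match w with
  | WVar i => WVar (if (i < n)%N then i else (i + k)%N)
  | WOne => WOne
  | WMul w1 w2 => WMul (shift n k w1) (shift n k w2)
  | WInv w1 => WInv (shift n k w1)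
  end.

Lemma weval_ext (v v' : nat -> G) w : (forall i, v i = v' i) -> weval v w = weval v' w.
Proof. by move=> h; elim: w => //= [w1 -> w2 ->|w1 ->]. Qed.

Lemma scoped_clean n w : scoped n (clean n w).
Proof. elim: w => //= [i|w1 -> w2 ->] //; by case: ifP => /=. Qed.

Lemma ev_clean s s' n w : size s = n -> ev (s ++ s') (clean n w) = ev s w.
Proof.
move=> sz; rewrite /ev; elim: w => //= [i|w1 -> w2 ->|w1 ->] //.
case: ifP => /= h; first by rewrite nth_cat sz h.
by rewrite nth_default // sz leqNgt h.
Qed.

Lemma ev_shift (b cs cs' : seq G) w :
  ev (b ++ cs ++ cs') (shift (size b) (size cs) w) = ev (b ++ cs') w.
Proof.
rewrite /ev; elim: w => //= [i|w1 -> w2 ->|w1 ->] //.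
case: ifP => h; first by rewrite !nth_cat h.
rewrite !nth_cat h; have -> : (i + size cs < size b)%N = false by lia.
have -> : (i + size cs - size b < size cs)%N = false by lia.
by congr nth; lia.
Qed.

Lemma ev_in (S : G -> Prop) s w : is_subgroup S -> (forall z, z \in s -> S z) -> S (ev s w).
Proof.
move=> [S1 [SM SV]] Hs; rewrite /ev; elim: w => //= [i|w1 h1 w2 h2|w1 h1]; auto.
case: (ltnP i (size s)) => h; first by apply: Hs; apply: mem_nth.
by rewrite nth_default.
Qed.

End Words.

Section TP.
Variables (G : groupType) (P0 : G -> Prop) (b b' : seq G).
Hypotheses (sz : size b = size b') (stp : same_tp b b' P0).

Definition Rb (x y : G) := exists w cs, (forall c, c \in cs -> P0 c) /\
  x = ev (b ++ cs) w /\ y = ev (b' ++ cs) w.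

Lemma tp1 cs w : (forall c, c \in cs -> P0 c) -> ev (b ++ cs) w = 1 -> ev (b' ++ cs) w = 1.
Proof.
move=> Hcs E; set n := (size b + size cs)%N.
have e1 := @ev_clean _ (b ++ cs) [::] n w; rewrite cats0 size_cat in e1.
have e2 := @ev_clean _ (b' ++ cs) [::] n w; rewrite cats0 size_cat -sz in e2.
have := proj1 (stp (clean n w, cs, true)); rewrite /tp_bs.
case.
  split; first exact: scoped_clean.
  split=> //; rewrite -/(ev (b ++ cs) (clean n w)) e1 //.
by move=> _ [_]; rewrite -/(ev (b' ++ cs) (clean n w)) e2.
Qed.

Lemma Rb_comb x y x' y' : Rb x y -> Rb x' y' -> exists cs,
  (forall c, c \in cs -> P0 c) /\ exists w1 w2,
   x = ev (b ++ cs) w1 /\ y = ev (b' ++ cs) w1 /\ x' = ev (b ++ cs) w2 /\ y' = ev (b' ++ cs) w2.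
Proof.
move=> [w [cs [Hc [-> ->]]]] [w' [cs' [Hc' [-> ->]]]].
exists (cs ++ cs'); split.
  by move=> c; rewrite mem_cat => /orP [/Hc|/Hc'].
exists (clean (size b + size cs) w), (shift (size b) (size cs) w').
split; first by rewrite catA ev_clean // size_cat.
split; first by rewrite catA ev_clean // size_cat sz.
split; first by rewrite ev_shift.
by rewrite sz ev_shift.
Qed.

Lemma Rb_fun x y y' : Rb x y -> Rb x y' -> y = y'.
Proof.
move=> h h'; have [cs [Hc [w1 [w2 [E1 [E2 [E3 E4]]]]]]] := Rb_comb h h'.
have := @tp1 cs (WMul w1 (WInv w2)) Hc; rewrite /ev /= -/(ev _ w1) -/(ev _ w2) -/(ev _ w1) -/(ev _ w2).
by rewrite -E1 -E2 -E3 -E4 mulgV => /(_ erefl) /divg1_eq.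
Qed.

Lemma Rb_mul x y x' y' : Rb x y -> Rb x' y' -> Rb (x * x') (y * y').
Proof.
move=> h h'; have [cs [Hc [w1 [w2 [E1 [E2 [E3 E4]]]]]]] := Rb_comb h h'.
by exists (WMul w1 w2), cs; rewrite /ev /= -/(ev _ w1) -/(ev _ w2) -/(ev _ w1) -/(ev _ w2) E1 E2 E3 E4.
Qed.

Lemma Rb_inv x y : Rb x y -> Rb x^-1 y^-1.
Proof. by move=> [w [cs [Hc [-> ->]]]]; exists (WInv w), cs. Qed.

Lemma Rb_one : Rb 1 1.
Proof. by exists WOne, [::]. Qed.

Lemma Rb_P0 c : P0 c -> Rb c c.
Proof.
move=> Pc; exists (WVar (size b)), [:: c]; split; first by move=> z; rewrite inE => /eqP ->.
by rewrite /ev /= !nth_cat ltnn subnn sz ltnn subnn.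
Qed.

Lemma Rb_b i : (i < size b)%N -> Rb (nth 1 b i) (nth 1 b' i).
Proof.
move=> h; exists (WVar i), [::]; split=> //.
by rewrite /ev /= !cats0.
Qed.

End TP.

Lemma same_tp_sym (G : groupType) (b b' : seq G) P0 : same_tp b b' P0 -> same_tp b' b P0.
Proof. by move=> h phi; split; move/h. Qed.

Lemma Rb_sym (G : groupType) (P0 : G -> Prop) b b' x y : Rb P0 b b' x y -> Rb P0 b' b y x.
Proof. by move=> [w [cs [Hc [-> ->]]]]; exists w, cs. Qed.

Lemma coset_ext (G H : groupType) (P0 : G -> Prop) (e e' : G -> H) (I : H -> Prop) :
  (forall x, P0 x -> e x = e' x) -> coset_reps P0 e I -> coset_reps P0 e' I.
Proof.
move=> E [I1 [Ex Un]]; split=> //; split.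
- move=> h; have [r [Ir [g0 [Pg ->]]]] := Ex h; by exists r; split=> //; exists g0; rewrite E.
- move=> r r' Ir Ir' [x [Px Ex']]; apply: Un => //; exists x; by rewrite E.
Qed.

Fixpoint lw (G : groupType) (t : nat -> seq (G + G)) (w : word) : seq (G + G) :=
  match w with
  | WVar i => t i
  | WOne => [::]
  | WMul w1 w2 => lw t w1 ++ lw t w2
  | WInv w1 => invl (lw t w1)
  end.

Lemma lw_good (G : groupType) (A B : G -> Prop) t w : is_subgroup A -> is_subgroup B ->
  (forall i, goodl A B (t i)) -> goodl A B (lw t w).
Proof.
move=> sA sB h; elim: w => //= [w1 h1 w2 h2|w1 h1]; [exact: goodl_cat|exact: goodl_invl].
Qed.

Lemma lw_prod (G : groupType) t w : prodG (lw t w) = weval (fun i => prodG (t i)) w :> G.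
Proof. by elim: w => //= [w1 <- w2 <-|w1 <-]; rewrite ?prodG_cat ?prodG_invl. Qed.

Lemma mapf_prod_invl (G : groupType) (A B : G -> Prop) (rho : G -> G) l :
  (forall x, A x -> rho x^-1 = (rho x)^-1) -> goodl A B l ->
  prodG (mapf rho id (invl l)) = (prodG (mapf rho id l))^-1.
Proof.
move=> hr; elim: l => [|z l IH] /=; first by rewrite invg1.
move=> [Hz Hl]; rewrite /invl /= rev_cons -cats1 -/(invl l) mapf_cat prodG_cat IH //.
by case: z Hz => x Hx; rewrite /= mulg1 invgM // hr.
Qed.

Lemma lw_mprod (G : groupType) (A B : G -> Prop) (rho : G -> G) t w :
  is_subgroup A -> is_subgroup B ->
  (forall x, A x -> rho x^-1 = (rho x)^-1) -> (forall i, goodl A B (t i)) ->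
  prodG (mapf rho id (lw t w)) = weval (fun i => prodG (mapf rho id (t i))) w.
Proof.
move=> sA sB hr ht; elim: w => //= [w1 <- w2 <-|w1 <-]; first by rewrite mapf_cat prodG_cat.
by rewrite (mapf_prod_invl (B := B) hr) //; apply: lw_good.
Qed.

Lemma GR_ext1 (G H1 H2 : groupType) (P0 : G -> Prop) (e1 e1' : G -> H1) (e2 : G -> H2)
  (I1 : H1 -> Prop) (I2 : H2 -> Prop) ws u v :
  (forall x, P0 x -> e1 x = e1' x) -> inUx P0 I1 I2 u ->
  genrel P0 e1 e2 I1 I2 ws u v -> genrel P0 e1' e2 I1 I2 ws u v.
Proof.
move=> E; elim: ws u => [|z ws IH] u //= Uu [m [Hm Hr]]; exists m.
have Um : inUx P0 I1 I2 m.
  by case: z Hm => g Hm; [apply: (j1_U Uu Hm)|apply: (j2_U Uu Hm)].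
split; last exact: IH.
case: z Hm => g [E1 [Pm [Im Em]]]; split=> //; split=> //; split=> //.
by rewrite -!E //; case: Uu.
Qed.

Section K.
Variables (G : groupType) (P0 P1 P2 P3 : G -> Prop).
Hypothesis NF : NF_fin P0 P1 P2 P3.
Variables (b1 b2 a : seq G).
Hypotheses (sz : size b1 = size b2) (stp : same_tp b1 b2 P0)
  (hb1 : forall x, x \in b1 -> P1 x) (hb2 : forall x, x \in b2 -> P1 x)
  (ha : forall x, x \in a -> P2 x).

Let sP0 := NF_sP0 NF.
Let sP1 := NF_sP1 NF.
Let sP2 := NF_sP2 NF.
Let sP3 := NF_sP3 NF.
Let i01 := NF_01 NF.
Let i02 := NF_02 NF.
Let i13 := NF_13 NF.
Let i23 := NF_23 NF.

Local Notation R := (Rb P0 b1 b2).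
Definition A1 x := exists y, R x y.
Definition rho x := epsilon (inhabits (1 : G)) (R x).

Lemma sA1 : is_subgroup A1.
Proof.
split; first by exists 1; apply: Rb_one.
split; first by move=> x y [x' h] [y' h']; exists (x' * y'); apply: (Rb_mul sz).
by move=> x [y h]; exists y^-1; apply: Rb_inv.
Qed.

Lemma P0A1 : incl_set P0 A1.
Proof. by move=> c Pc; exists c; apply: Rb_P0. Qed.

Lemma R_P1 x y : R x y -> P1 x /\ P1 y.
Proof.
move=> [w [cs [Hc [-> ->]]]]; split; (apply: ev_in => // z; rewrite mem_cat => /orP [h|/Hc /i01] //); [exact: hb1|exact: hb2].
Qed.

Lemma A1P1 : incl_set A1 P1.
Proof. by move=> x [y /R_P1 []]. Qed.

Lemma rho_spec x : A1 x -> R x (rho x).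
Proof. by move=> [y h]; apply: (epsilon_spec (inhabits (1 : G)) (R x)); exists y. Qed.

Lemma rho_eq x y : R x y -> rho x = y.
Proof. move=> h; have hx : A1 x by exists y. exact: (@Rb_fun _ _ _ _ sz stp x (rho x) y (rho_spec hx) h). Qed.

Lemma rhoM x y : A1 x -> A1 y -> rho (x * y) = rho x * rho y.
Proof. by move=> hx hy; apply: rho_eq; apply: (Rb_mul sz); apply: rho_spec. Qed.

Lemma rhoV x : A1 x -> rho x^-1 = (rho x)^-1.
Proof. by move=> hx; apply: rho_eq; apply: Rb_inv; apply: rho_spec. Qed.

Lemma rho_inj x y : A1 x -> A1 y -> rho x = rho y -> x = y.
Proof.
move=> hx hy E; have h1 := Rb_sym (rho_spec hx); have h2 := Rb_sym (rho_spec hy).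
rewrite -E in h2; exact: (Rb_fun (esym sz) (same_tp_sym stp) h1 h2).
Qed.

Lemma rho_P1 x : A1 x -> P1 (rho x).
Proof. by move=> hx; case: (R_P1 (rho_spec hx)). Qed.

Lemma rho_P0 c : P0 c -> rho c = c.
Proof. by move=> Pc; apply: rho_eq; apply: Rb_P0. Qed.

Lemma rho_b i : (i < size b1)%N -> rho (nth 1 b1 i) = nth 1 b2 i.
Proof. by move=> h; apply: rho_eq; apply: Rb_b. Qed.

Lemma map_rho_b1 : map rho b1 = b2.
Proof.
apply: (@eq_from_nth _ 1); first by rewrite size_map.
by move=> i; rewrite size_map => h; rewrite (nth_map 1) // rho_b.
Qed.

Theorem keyK bs w : (forall c, c \in bs -> P0 c) ->
  ev (b1 ++ a ++ bs) w = 1 -> ev (b2 ++ a ++ bs) w = 1.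
Proof.
move=> hbs E1; apply: NNPP => ne.
pose tenv : seq (G + G) := map inl b1 ++ map inr a ++ map inl bs.
pose t i : seq (G + G) := if (i < size tenv)%N then [:: nth (inl 1) tenv i] else [::].
have gz : forall z, z \in tenv -> match z with inl x => A1 x | inr x => P2 x end.
  move=> z; rewrite !mem_cat => /orP [/mapP [x hx ->]|/orP [/mapP [x hx ->]|/mapP [x hx ->]]].
  - by exists (rho x); apply: rho_spec; exists (nth 1 b2 (index x b1));
      rewrite -{1}(nth_index 1 hx); apply: Rb_b; rewrite index_mem.
  - exact: ha.
  - by apply: P0A1; apply: hbs.
have gt : forall i, goodl A1 P2 (t i).
  by move=> i; rewrite /t; case: ifP => // h; split=> //; apply: gz; apply: mem_nth.
have ztenv : map (@zval G) tenv = b1 ++ a ++ bs.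
  by rewrite !map_cat -!map_comp !map_id.
have mtenv : map (@zval G) (mapf rho id tenv) = b2 ++ a ++ bs.
  rewrite /mapf !map_cat -!map_comp /comp /= map_id -map_rho_b1.
  by congr (_ ++ (_ ++ _)); apply: map_id_in => x /hbs /rho_P0.
have stenv : size tenv = size (b1 ++ a ++ bs) by rewrite -ztenv size_map.
have L4 : forall i, prodG (t i) = nth 1 (b1 ++ a ++ bs) i.
  move=> i; rewrite /t; case: ifP => h /=.
    by rewrite mulg1 -ztenv (nth_map (inl 1)).
  by rewrite nth_default // -stenv leqNgt h.
have L5 : forall i, prodG (mapf rho id (t i)) = nth 1 (b2 ++ a ++ bs) i.
  move=> i; rewrite /t; case: ifP => h /=.
    rewrite mulg1 -mtenv (nth_map (inl 1)) ?size_map //.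
    by rewrite /mapf (nth_map (inl 1)).
  have s2 : size (b2 ++ a ++ bs) = size tenv by rewrite -mtenv /mapf !size_map.
  by rewrite nth_default // s2 leqNgt h.
set L := lw t w.
have gL : goodl A1 P2 L by apply: lw_good => //; apply: sA1.
have pL : prodG L = 1 by rewrite lw_prod -E1 /ev; apply: weval_ext.
set d := ev (b2 ++ a ++ bs) w.
have pL2 : prodG (mapf rho id L) = d.
  rewrite (lw_mprod (A := A1) (B := P2)) //; [apply: weval_ext => i; exact: L5|exact: sA1|exact: rhoV].
have gL2 : goodl P1 P2 (mapf rho id L) by apply: goodl_mapf gL => // x; apply: rho_P1.
have Pd : P3 d.
  apply: ev_in => // z; rewrite !mem_cat => /orP [/hb2 /i13|/orP [/ha /i23|/hbs /i01 /i13]] //.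
have [H1 [H2 [e1 [e2 [I1 [I2 [ty [f [hf [u [Uu Hu]]]]]]]]]]] := NF_sep NF Pd ne.
have [_ [_ [em1 [em2 [cr1 cr2]]]]] := ty.
have em1' : is_emb A1 (fun x => e1 (rho x)).
  case: em1 => eM eI; split=> x y hx hy.
  - by rewrite rhoM // eM //; apply: rho_P1.
  - by move=> E; apply: rho_inj => //; apply: eI => //; apply: rho_P1.
have cr1' : coset_reps P0 (fun x => e1 (rho x)) I1.
  by apply: coset_ext cr1 => x /rho_P0 ->.
have HGd := HG sP0 em1 cr1 i01 sP3 i13 i23 hf gL2 Uu.
rewrite pL2 wordE_mapf in HGd.
have HGd' := GR_ext1 (e1' := fun x => e1 (rho x)) (fun x h => esym (f_equal e1 (rho_P0 h))) Uu HGd.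
have := core NF sA1 sP2 P0A1 i02 A1P1 (fun x h => h) em1' em2 cr1' cr2
  (l' := [::]) gL I _ Uu HGd' (erefl u).
by move=> /(_ pL) /Hu.
Qed.

End K.

Lemma part4 (G : groupType) (P0 P1 P2 P3 : G -> Prop) :
  NF_fin P0 P1 P2 P3 ->
  (forall a : seq G, (forall x, x \in a -> P2 x) -> does_not_split a P1 P0).
Proof.
move=> NF a ha b1 b2 sz h1 h2 stp [[w bs] pos]; rewrite /tp_bs.
have sza : size (b1 ++ a) = size (b2 ++ a) by rewrite !size_cat sz.
rewrite sza -!catA.
have key : (forall c, c \in bs -> P0 c) ->
    (ev (b1 ++ a ++ bs) w = 1 <-> ev (b2 ++ a ++ bs) w = 1).
  move=> hbs; split.
  - exact: (keyK NF sz stp h1 h2 ha hbs).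
  - exact: (keyK NF (esym sz) (same_tp_sym stp) h2 h1 ha hbs).
split; move=> [sc [hbs E]]; split=> //; split=> //; have := key hbs; rewrite /ev;
  case: pos E => E [k1 k2]; by [apply: k1|apply: k2|move=> /k2|move=> /k1].
Qed.


Unset Implicit Arguments.

Theorem claim2p9 (G : groupType) (P0 P1 P2 P3 : G -> Prop) :
  NF_fin P0 P1 P2 P3 ->
  (* (1) *)
  NF_fin P0 P2 P1 P3 /\
  (* (2) *)
  (forall P1' P2' P3' : G -> Prop,
     is_subgroup P1' -> is_subgroup P2' -> is_subgroup P3' ->
     incl_set P0 P1' -> incl_set P1' P1 ->
     incl_set P0 P2' -> incl_set P2' P2 ->
     incl_set (unionP P1' P2') P3' -> incl_set P3' P3 ->
     NF_rfin P0 P1' P2' P3') /\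
  (* (3) *)
  (forall (G' : groupType) (Q0 Q1 Q2 Q3 : G' -> Prop) (f0 f1 f2 : G' -> G),
     NF_fin Q0 Q1 Q2 Q3 -> generated_by Q3 Q1 Q2 ->
     is_iso_onto Q0 P0 f0 -> is_iso_onto Q1 P1 f1 -> is_iso_onto Q2 P2 f2 ->
     (forall x, Q0 x -> f1 x = f0 x) -> (forall x, Q0 x -> f2 x = f0 x) ->
     exists f3 : G' -> G,
       is_emb Q3 f3 /\ (forall x, Q3 x -> P3 (f3 x)) /\
       (forall x, Q1 x -> f3 x = f1 x) /\ (forall x, Q2 x -> f3 x = f2 x)) /\
  (* (4) *)
  (forall a : seq G, (forall x, x \in a -> P2 x) -> does_not_split a P1 P0).
Proof.
move=> NF; split; first exact: (part1 NF).
split; first exact: (part2 NF).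
split; first exact: (part3 NF).
exact: (part4 NF).
Qed.
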